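(* Let $F:\mathcal C\to\mathcal D$ be a lax functor of bicategories and let $\mathcal E$ be a diagram of 2-cells in $\mathcal L(U\mathcal C)$ such that any two parallel composites in $\mathcal E$ have the same supporting map $u$. Then the image of $\mathcal E$ in $\mathcal D$ under the strict functor $\mathcal L(U\mathcal C)\to\mathcal D$ induced by $F$ commutes. The same holds for oplax functors (with the comparison maps reversed).
   Context: A graph is a directed graph; $U\mathcal C$ is the graph of 0-cells and 1-cells of a bicategory $\mathcal C$, and $\mathcal F(G)$ is the free bicategory on a graph $G$ (1-cells are parenthesized composable words in edges and formal units $I$; 2-cells are generated by whiskered formal associators and unitors modulo the bicategory axioms). Let $\mathbf{Lax}_1$ be the category whose objects are lax functors $F:\mathcal C\to\mathcal D$ (with unit comparisons $i:I_{FA}\to F(I_A)$ and composition comparisons $m:F(X)\odot F(Y)\to F(X\odot Y)$) and whose morphisms are pairs of strict functors forming a strictly commuting square. The functor $\mathbf{Lax}_1\to\mathbf{Graph}$, $F\mapsto U\mathcal C$, has a left adjoint sending $G$ to a lax functor $\Phi_G:\mathcal F(G)\to\mathcal L(G)$. Explicitly, the 0-cells of $\mathcal L(G)$ are the vertices of $G$; its 1-cells are parenthesizations of words $W_1\odot\cdots\odot W_\ell$ where each $W_j$ is either a formal unit $I$ or a term $\Phi(w)$ with $w$ a 1-cell of $\mathcal F(G)$ (a $\Phi$-term), the total string of edges being composable; its 2-cells are generated by associators/unitors of $\mathcal F(G)$ applied inside $\Phi$-terms, associators/unitors applied to the outer word, $i:I\to\Phi(I)$ and $m:\Phi(w)\odot\Phi(w')\to\Phi(w\odot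 w')$ applied to any subword, modulo the relations making $\mathcal L(G)$ a bicategory and $\Phi_G$ a lax functor (pentagon, triangle, lax-functor unit and associativity coherence, interchange, naturality). By the universal property, $F$ induces a unique strict functor $\mathcal L(U\mathcal C)\to\mathcal D$ with $\mathcal L(U\mathcal C)\to\mathcal D$ composed with $\Phi_{U\mathcal C}$ equal to $F$ composed with the counit $\mathcal F(U\mathcal C)\to\mathcal C$; diagrams in $\mathcal D$ in its image are the formal diagrams for $F$. Supporting map: each hom-category of $\mathcal L(G)$ maps to the category $\Delta$ of finite totally ordered sets $\underline k=\{1,\dots,k\}$ ($k\ge0$) and order-preserving maps, sending a 1-cell with $k$ $\Phi$-terms to $\underline k$; a generating 2-cell is sent to the map recording which target $\Phi$-term each source $\Phi$-term lands in: associators and unitors go to identities, $i$ creating a new $\Phi$-term in position $j$ goes to the coface $d^j:\underline{k-1}\to\underline k$ (the injection missing $j$), and $m$ merging the $j$-th and $(j+1)$-st $\Phi$-terms goes to the codegeneracy $s^j:\underline{k+1}\to\underline k$ (the surjection identifying $j,j+1$). This respects the relations and gives a functor; the image $u(\phi)$ of a 2-cell $\phi$ is its supporting map. *)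

(* Defs.v *)
(* Convention: horizontal composition is written in diagrammatic order,
   hcomp1 (X : hom a b) (Y : hom b c) : hom a c  ("X ⊙ Y"), and vertical
   composition vcomp (α : f ⇒ g) (β : g ⇒ h) : f ⇒ h is also diagrammatic. *)
From Stdlib Require Import Arith.

Set Implicit Arguments.
Unset Strict Implicit.

Record Bicat : Type := {
  ob : Type;
  hom : ob -> ob -> Type;
  cell : forall {a b : ob}, hom a b -> hom a b -> Type;
  id2 : forall {a b : ob} (f : hom a b), cell f f;
  vcomp : forall {a b : ob} {f g h : hom a b}, cell f g -> cell g h -> cell f h;
  id1 : forall (a : ob), hom a a;
  hcomp1 : forall {a b c : ob}, hom a b -> hom b c -> hom a c;
  hcomp2 : forall {a b c : ob} {f f' : hom a b} {g g' : hom b c},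
      cell f f' -> cell g g' -> cell (hcomp1 f g) (hcomp1 f' g');
  assoc : forall {a b c d : ob} (f : hom a b) (g : hom b c) (h : hom c d),
      cell (hcomp1 (hcomp1 f g) h) (hcomp1 f (hcomp1 g h));
  assoc_inv : forall {a b c d : ob} (f : hom a b) (g : hom b c) (h : hom c d),
      cell (hcomp1 f (hcomp1 g h)) (hcomp1 (hcomp1 f g) h);
  lunit : forall {a b : ob} (f : hom a b), cell (hcomp1 (id1 a) f) f;
  lunit_inv : forall {a b : ob} (f : hom a b), cell f (hcomp1 (id1 a) f);
  runit : forall {a b : ob} (f : hom a b), cell (hcomp1 f (id1 b)) f;
  runit_inv : forall {a b : ob} (f : hom a b), cell f (hcomp1 f (id1 b));
  vcomp_id_l : forall a b (f g : hom a b) (x : cell f g), vcomp (id2 f) x = x;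
  vcomp_id_r : forall a b (f g : hom a b) (x : cell f g), vcomp x (id2 g) = x;
  vcomp_assoc : forall a b (f g h k : hom a b) (x : cell f g) (y : cell g h)
      (z : cell h k), vcomp (vcomp x y) z = vcomp x (vcomp y z);
  hcomp2_id : forall a b c (f : hom a b) (g : hom b c),
      hcomp2 (id2 f) (id2 g) = id2 (hcomp1 f g);
  interchange : forall a b c (f f' f'' : hom a b) (g g' g'' : hom b c)
      (x : cell f f') (x' : cell f' f'') (y : cell g g') (y' : cell g' g''),
      hcomp2 (vcomp x x') (vcomp y y') = vcomp (hcomp2 x y) (hcomp2 x' y');
  assoc_nat : forall a b c d (f f' : hom a b) (g g' : hom b c) (h h' : hom c d)
      (x : cell f f') (y : cell g g') (z : cell h h'),
      vcomp (hcomp2 (hcomp2 x y) z) (assoc f' g' h')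
      = vcomp (assoc f g h) (hcomp2 x (hcomp2 y z));
  lunit_nat : forall a b (f f' : hom a b) (x : cell f f'),
      vcomp (hcomp2 (id2 (id1 a)) x) (lunit f') = vcomp (lunit f) x;
  runit_nat : forall a b (f f' : hom a b) (x : cell f f'),
      vcomp (hcomp2 x (id2 (id1 b))) (runit f') = vcomp (runit f) x;
  assoc_inv_l : forall a b c d (f : hom a b) (g : hom b c) (h : hom c d),
      vcomp (assoc f g h) (assoc_inv f g h) = id2 _;
  assoc_inv_r : forall a b c d (f : hom a b) (g : hom b c) (h : hom c d),
      vcomp (assoc_inv f g h) (assoc f g h) = id2 _;
  lunit_inv_l : forall a b (f : hom a b), vcomp (lunit f) (lunit_inv f) = id2 _;
  lunit_inv_r : forall a b (f : hom a b), vcomp (lunit_inv f) (lunit f) = id2 _;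
  runit_inv_l : forall a b (f : hom a b), vcomp (runit f) (runit_inv f) = id2 _;
  runit_inv_r : forall a b (f : hom a b), vcomp (runit_inv f) (runit f) = id2 _;
  pentagon : forall a b c d e (f : hom a b) (g : hom b c) (h : hom c d) (k : hom d e),
      vcomp (vcomp (hcomp2 (assoc f g h) (id2 k)) (assoc f (hcomp1 g h) k))
            (hcomp2 (id2 f) (assoc g h k))
      = vcomp (assoc (hcomp1 f g) h k) (assoc f g (hcomp1 h k));
  triangle : forall a b c (f : hom a b) (g : hom b c),
      vcomp (assoc f (id1 b) g) (hcomp2 (id2 f) (lunit g))
      = hcomp2 (runit f) (id2 g)
}.
Arguments hom : clear implicits.


Record LaxFunctor (C D : Bicat) : Type := {
  F0 : ob C -> ob D;
  F1 : forall {a b : ob C}, hom C a b -> hom D (F0 a) (F0 b);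
  F2 : forall {a b : ob C} {f g : hom C a b}, cell f g -> cell (F1 f) (F1 g);
  F2_id : forall a b (f : hom C a b), F2 (id2 f) = id2 (F1 f);
  F2_comp : forall a b (f g h : hom C a b) (x : cell f g) (y : cell g h),
      F2 (vcomp x y) = vcomp (F2 x) (F2 y);
  lax_i : forall (a : ob C), cell (id1 (F0 a)) (F1 (id1 a));
  lax_m : forall {a b c : ob C} (f : hom C a b) (g : hom C b c),
      cell (hcomp1 (F1 f) (F1 g)) (F1 (hcomp1 f g));
  lax_m_nat : forall a b c (f f' : hom C a b) (g g' : hom C b c)
      (x : cell f f') (y : cell g g'),
      vcomp (hcomp2 (F2 x) (F2 y)) (lax_m f' g') = vcomp (lax_m f g) (F2 (hcomp2 x y));
  lax_assoc : forall a b c d (f : hom C a b) (g : hom C b c) (h : hom C c d),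
      vcomp (vcomp (hcomp2 (lax_m f g) (id2 (F1 h))) (lax_m (hcomp1 f g) h))
            (F2 (assoc f g h))
      = vcomp (vcomp (assoc (F1 f) (F1 g) (F1 h)) (hcomp2 (id2 (F1 f)) (lax_m g h)))
              (lax_m f (hcomp1 g h));
  lax_lunit : forall a b (f : hom C a b),
      vcomp (vcomp (hcomp2 (lax_i a) (id2 (F1 f))) (lax_m (id1 a) f)) (F2 (lunit f))
      = lunit (F1 f);
  lax_runit : forall a b (f : hom C a b),
      vcomp (vcomp (hcomp2 (id2 (F1 f)) (lax_i b)) (lax_m f (id1 b))) (F2 (runit f))
      = runit (F1 f)
}.

Record OplaxFunctor (C D : Bicat) : Type := {
  oF0 : ob C -> ob D;
  oF1 : forall {a b : ob C}, hom C a b -> hom D (oF0 a) (oF0 b);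
  oF2 : forall {a b : ob C} {f g : hom C a b}, cell f g -> cell (oF1 f) (oF1 g);
  oF2_id : forall a b (f : hom C a b), oF2 (id2 f) = id2 (oF1 f);
  oF2_comp : forall a b (f g h : hom C a b) (x : cell f g) (y : cell g h),
      oF2 (vcomp x y) = vcomp (oF2 x) (oF2 y);
  oplax_i : forall (a : ob C), cell (oF1 (id1 a)) (id1 (oF0 a));
  oplax_m : forall {a b c : ob C} (f : hom C a b) (g : hom C b c),
      cell (oF1 (hcomp1 f g)) (hcomp1 (oF1 f) (oF1 g));
  oplax_m_nat : forall a b c (f f' : hom C a b) (g g' : hom C b c)
      (x : cell f f') (y : cell g g'),
      vcomp (oF2 (hcomp2 x y)) (oplax_m f' g') = vcomp (oplax_m f g) (hcomp2 (oF2 x) (oF2 y));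
  oplax_assoc : forall a b c d (f : hom C a b) (g : hom C b c) (h : hom C c d),
      vcomp (vcomp (oF2 (assoc f g h)) (oplax_m f (hcomp1 g h)))
            (hcomp2 (id2 (oF1 f)) (oplax_m g h))
      = vcomp (vcomp (oplax_m (hcomp1 f g) h) (hcomp2 (oplax_m f g) (id2 (oF1 h))))
              (assoc (oF1 f) (oF1 g) (oF1 h));
  oplax_lunit : forall a b (f : hom C a b),
      vcomp (vcomp (oF2 (lunit_inv f)) (oplax_m (id1 a) f))
            (hcomp2 (oplax_i a) (id2 (oF1 f)))
      = lunit_inv (oF1 f);
  oplax_runit : forall a b (f : hom C a b),
      vcomp (vcomp (oF2 (runit_inv f)) (oplax_m f (id1 b)))
            (hcomp2 (id2 (oF1 f)) (oplax_i b))
      = runit_inv (oF1 f)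
}.

Record Graph : Type := { vert : Type; edge : vert -> vert -> Type }.
Arguments edge : clear implicits.

Definition UG (C : Bicat) : Graph := {| vert := ob C; edge := hom C |}.

(** * The free bicategory F(G): 1-cells (parenthesized words) and
      2-cell terms (generated by associators/unitors; 2-cells of F(G)
      are equivalence classes of these terms) *)

Unset Implicit Arguments.
Inductive FWord (G : Graph) : vert G -> vert G -> Type :=
| fedge : forall a b, edge G a b -> FWord G a b
| funit : forall a, FWord G a a
| fcomp : forall a b c, FWord G a b -> FWord G b c -> FWord G a c.
Set Implicit Arguments.

Arguments fedge {G a b} _.
Arguments funit {G} a.
Arguments fcomp {G a b c} _ _.

Unset Implicit Arguments.
Inductive FCell (G : Graph) : forall a b, FWord G a b -> FWord G a b -> Type :=
| fc_id : forall a b (w : FWord G a b), FCell G _ _ w w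
| fc_v : forall a b (w w' w'' : FWord G a b), FCell G _ _ w w' -> FCell G _ _ w' w'' -> FCell G _ _ w w''
| fc_h : forall a b c (w w' : FWord G a b) (v v' : FWord G b c),
    FCell G _ _ w w' -> FCell G _ _ v v' -> FCell G _ _ (fcomp w v) (fcomp w' v')
| fc_assoc : forall a b c d (w : FWord G a b) (v : FWord G b c) (x : FWord G c d),
    FCell G _ _ (fcomp (fcomp w v) x) (fcomp w (fcomp v x))
| fc_assoc_inv : forall a b c d (w : FWord G a b) (v : FWord G b c) (x : FWord G c d),
    FCell G _ _ (fcomp w (fcomp v x)) (fcomp (fcomp w v) x)
| fc_lunit : forall a b (w : FWord G a b), FCell G _ _ (fcomp (funit a) w) w
| fc_lunit_inv : forall a b (w : FWord G a b), FCell G _ _ w (fcomp (funit a) w)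
| fc_runit : forall a b (w : FWord G a b), FCell G _ _ (fcomp w (funit b)) w
| fc_runit_inv : forall a b (w : FWord G a b), FCell G _ _ w (fcomp w (funit b)).
Set Implicit Arguments.
Arguments FCell {G a b} _ _.

(** Counit F(U C) -> C *)
Fixpoint evF1 (C : Bicat) (a b : ob C) (w : FWord (UG C) a b) : hom C a b :=
  match w in FWord _ a b return hom C a b with
  | fedge e => e
  | funit a => id1 a
  | fcomp w v => hcomp1 (evF1 w) (evF1 v)
  end.

Fixpoint evF2 (C : Bicat) (a b : ob C) (w w' : FWord (UG C) a b)
  (x : FCell w w') : cell (evF1 w) (evF1 w') :=
  match x in FCell w w' return cell (evF1 w) (evF1 w') with
  | fc_id _ _ _ w => id2 _
  | fc_v _ _ _ _ _ _ x y => vcomp (evF2 x) (evF2 y)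
  | fc_h _ _ _ _ _ _ _ _ x y => hcomp2 (evF2 x) (evF2 y)
  | fc_assoc _ _ _ _ _ w v x => assoc _ _ _
  | fc_assoc_inv _ _ _ _ _ w v x => assoc_inv _ _ _
  | fc_lunit _ _ _ w => lunit _
  | fc_lunit_inv _ _ _ w => lunit_inv _
  | fc_runit _ _ _ w => runit _
  | fc_runit_inv _ _ _ w => runit_inv _
  end.

(** * The bicategory L(G): 1-cells are parenthesized words in Φ-terms
      Φ(w) and formal units I *)

Unset Implicit Arguments.
Inductive LWord (G : Graph) : vert G -> vert G -> Type :=
| lphi : forall a b, FWord G a b -> LWord G a b
| lunitw : forall a, LWord G a a
| lcomp : forall a b c, LWord G a b -> LWord G b c -> LWord G a c.
Set Implicit Arguments.

Arguments lphi {G a b} _.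
Arguments lunitw {G} a.
Arguments lcomp {G a b c} _ _.

Fixpoint nphi (G : Graph) (a b : vert G) (l : LWord G a b) : nat :=
  match l with
  | lphi _ => 1
  | lunitw _ => 0
  | lcomp l1 l2 => nphi l1 + nphi l2
  end.

(** 2-cell terms of L(G) for the lax case (2-cells of L(G) are classes of
    these terms modulo the relations listed in the paper).  Generators:
    Φ applied to 2-cells of F(G), outer associators/unitors, i and m;
    applying i or m to a subword is expressed by horizontal composition
    with identities. *)
Unset Implicit Arguments.
Inductive LCell (G : Graph) : forall a b, LWord G a b -> LWord G a b -> Type :=
| lc_id : forall a b (l : LWord G a b), LCell G _ _ l l
| lc_v : forall a b (l l' l'' : LWord G a b), LCell G _ _ l l' -> LCell G _ _ l' l'' -> LCell G _ _ l l''
| lc_h : forall a b c (l l' : LWord G a b) (k k' : LWord G b c),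
    LCell G _ _ l l' -> LCell G _ _ k k' -> LCell G _ _ (lcomp l k) (lcomp l' k')
| lc_assoc : forall a b c d (l : LWord G a b) (k : LWord G b c) (j : LWord G c d),
    LCell G _ _ (lcomp (lcomp l k) j) (lcomp l (lcomp k j))
| lc_assoc_inv : forall a b c d (l : LWord G a b) (k : LWord G b c) (j : LWord G c d),
    LCell G _ _ (lcomp l (lcomp k j)) (lcomp (lcomp l k) j)
| lc_lunit : forall a b (l : LWord G a b), LCell G _ _ (lcomp (lunitw a) l) l
| lc_lunit_inv : forall a b (l : LWord G a b), LCell G _ _ l (lcomp (lunitw a) l)
| lc_runit : forall a b (l : LWord G a b), LCell G _ _ (lcomp l (lunitw b)) l
| lc_runit_inv : forall a b (l : LWord G a b), LCell G _ _ l (lcomp l (lunitw b))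
| lc_Phi : forall a b (w w' : FWord G a b), FCell w w' -> LCell G _ _ (lphi w) (lphi w')
| lc_i : forall a, LCell G _ _ (lunitw a) (lphi (funit a))
| lc_m : forall a b c (w : FWord G a b) (v : FWord G b c),
    LCell G _ _ (lcomp (lphi w) (lphi v)) (lphi (fcomp w v)).
Set Implicit Arguments.
Arguments LCell {G a b} _ _.

Unset Implicit Arguments.
Inductive LCellOp (G : Graph) : forall a b, LWord G a b -> LWord G a b -> Type :=
| lo_id : forall a b (l : LWord G a b), LCellOp G _ _ l l
| lo_v : forall a b (l l' l'' : LWord G a b), LCellOp G _ _ l l' -> LCellOp G _ _ l' l'' -> LCellOp G _ _ l l''
| lo_h : forall a b c (l l' : LWord G a b) (k k' : LWord G b c),
    LCellOp G _ _ l l' -> LCellOp G _ _ k k' -> LCellOp G _ _ (lcomp l k) (lcomp l' k')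
| lo_assoc : forall a b c d (l : LWord G a b) (k : LWord G b c) (j : LWord G c d),
    LCellOp G _ _ (lcomp (lcomp l k) j) (lcomp l (lcomp k j))
| lo_assoc_inv : forall a b c d (l : LWord G a b) (k : LWord G b c) (j : LWord G c d),
    LCellOp G _ _ (lcomp l (lcomp k j)) (lcomp (lcomp l k) j)
| lo_lunit : forall a b (l : LWord G a b), LCellOp G _ _ (lcomp (lunitw a) l) l
| lo_lunit_inv : forall a b (l : LWord G a b), LCellOp G _ _ l (lcomp (lunitw a) l)
| lo_runit : forall a b (l : LWord G a b), LCellOp G _ _ (lcomp l (lunitw b)) l
| lo_runit_inv : forall a b (l : LWord G a b), LCellOp G _ _ l (lcomp l (lunitw b))
| lo_Phi : forall a b (w w' : FWord G a b), FCell w w' -> LCellOp G _ _ (lphi w) (lphi w')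
| lo_i : forall a, LCellOp G _ _ (lphi (funit a)) (lunitw a)
| lo_m : forall a b c (w : FWord G a b) (v : FWord G b c),
    LCellOp G _ _ (lphi (fcomp w v)) (lcomp (lphi w) (lphi v)).
Set Implicit Arguments.
Arguments LCellOp {G a b} _ _.

(** A map in Δ from k to k' (order preserving map
      {1..k} -> {1..k'}) is represented by a function nat -> nat, read
      0-based and only on arguments i < k; two such maps are equal iff
      they agree on all i < k. *)

Fixpoint supp (G : Graph) (a b : vert G) (l l' : LWord G a b) (x : LCell l l')
  : nat -> nat :=
  match x with
  | lc_id _ _ _ _ => fun i => i
  | lc_v _ _ _ _ _ _ x y => fun i => supp y (supp x i)
  | lc_h _ _ _ _ l l' _ _ x y => fun i =>
      if i <? nphi l then supp x i else nphi l' + supp y (i - nphi l)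
  | lc_assoc _ _ _ _ _ _ _ _ => fun i => i
  | lc_assoc_inv _ _ _ _ _ _ _ _ => fun i => i
  | lc_lunit _ _ _ _ => fun i => i
  | lc_lunit_inv _ _ _ _ => fun i => i
  | lc_runit _ _ _ _ => fun i => i
  | lc_runit_inv _ _ _ _ => fun i => i
  | lc_Phi _ _ _ _ _ _ => fun i => i
  | lc_i _ _ => fun i => i                 (* coface: empty domain *)
  | lc_m _ _ _ _ _ _ => fun _ => 0         (* codegeneracy 2 -> 1 *)
  end.

(** oplax case: comparison maps reversed, so the supporting map lives in
    Δ^op: u(φ) : nphi target -> nphi source. *)
Fixpoint suppOp (G : Graph) (a b : vert G) (l l' : LWord G a b) (x : LCellOp l l')
  : nat -> nat :=
  match x with
  | lo_id _ _ _ _ => fun i => i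
  | lo_v _ _ _ _ _ _ x y => fun i => suppOp x (suppOp y i)
  | lo_h _ _ _ _ l l' _ _ x y => fun i =>
      if i <? nphi l' then suppOp x i else nphi l + suppOp y (i - nphi l')
  | lo_assoc _ _ _ _ _ _ _ _ => fun i => i
  | lo_assoc_inv _ _ _ _ _ _ _ _ => fun i => i
  | lo_lunit _ _ _ _ => fun i => i
  | lo_lunit_inv _ _ _ _ => fun i => i
  | lo_runit _ _ _ _ => fun i => i
  | lo_runit_inv _ _ _ _ => fun i => i
  | lo_Phi _ _ _ _ _ _ => fun i => i
  | lo_i _ _ => fun i => i
  | lo_m _ _ _ _ _ _ => fun _ => 0
  end.

(** * The strict functor L(U C) -> D induced by a lax functor F, i.e. the
      unique strict functor whose composite with Φ is F ∘ counit. *)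

Section Induced.
Variables (C D : Bicat).

Fixpoint evL1 (F : LaxFunctor C D) (a b : ob C) (l : LWord (UG C) a b)
  : hom D (F0 F a) (F0 F b) :=
  match l in LWord _ a b return hom D (F0 F a) (F0 F b) with
  | lphi w => F1 F (evF1 w)
  | lunitw a => id1 (F0 F a)
  | lcomp l k => hcomp1 (evL1 F l) (evL1 F k)
  end.

Fixpoint evL2 (F : LaxFunctor C D) (a b : ob C) (l l' : LWord (UG C) a b)
  (x : LCell l l') : cell (evL1 F l) (evL1 F l') :=
  match x in LCell l l' return cell (evL1 F l) (evL1 F l') with
  | lc_id _ _ _ _ => id2 _
  | lc_v _ _ _ _ _ _ x y => vcomp (evL2 F x) (evL2 F y)
  | lc_h _ _ _ _ _ _ _ _ x y => hcomp2 (evL2 F x) (evL2 F y)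
  | lc_assoc _ _ _ _ _ _ _ _ => assoc _ _ _
  | lc_assoc_inv _ _ _ _ _ _ _ _ => assoc_inv _ _ _
  | lc_lunit _ _ _ _ => lunit _
  | lc_lunit_inv _ _ _ _ => lunit_inv _
  | lc_runit _ _ _ _ => runit _
  | lc_runit_inv _ _ _ _ => runit_inv _
  | lc_Phi _ _ _ _ _ x => F2 F (evF2 x)
  | lc_i _ a => lax_i F a
  | lc_m _ _ _ _ w v => lax_m F (evF1 w) (evF1 v)
  end.

Fixpoint evLo1 (F : OplaxFunctor C D) (a b : ob C) (l : LWord (UG C) a b)
  : hom D (oF0 F a) (oF0 F b) :=
  match l in LWord _ a b return hom D (oF0 F a) (oF0 F b) with
  | lphi w => oF1 F (evF1 w)
  | lunitw a => id1 (oF0 F a)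
  | lcomp l k => hcomp1 (evLo1 F l) (evLo1 F k)
  end.

Fixpoint evLo2 (F : OplaxFunctor C D) (a b : ob C) (l l' : LWord (UG C) a b)
  (x : LCellOp l l') : cell (evLo1 F l) (evLo1 F l') :=
  match x in LCellOp l l' return cell (evLo1 F l) (evLo1 F l') with
  | lo_id _ _ _ _ => id2 _
  | lo_v _ _ _ _ _ _ x y => vcomp (evLo2 F x) (evLo2 F y)
  | lo_h _ _ _ _ _ _ _ _ x y => hcomp2 (evLo2 F x) (evLo2 F y)
  | lo_assoc _ _ _ _ _ _ _ _ => assoc _ _ _
  | lo_assoc_inv _ _ _ _ _ _ _ _ => assoc_inv _ _ _
  | lo_lunit _ _ _ _ => lunit _
  | lo_lunit_inv _ _ _ _ => lunit_inv _
  | lo_runit _ _ _ _ => runit _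
  | lo_runit_inv _ _ _ _ => runit_inv _
  | lo_Phi _ _ _ _ _ x => oF2 F (evF2 x)
  | lo_i _ a => oplax_i F a
  | lo_m _ _ _ _ w v => oplax_m F (evF1 w) (evF1 v)
  end.

End Induced.

(* Main.v *)
Require Import Defs.
From Stdlib Require Import Arith List Lia ProofIrrelevance Eqdep.
Import ListNotations.

Notation "x >> y" := (vcomp x y) (at level 40, left associativity).
Notation "x ** y" := (hcomp2 x y) (at level 35, right associativity).

Section Gen.
Context {B : Bicat}.

Lemma vA {a b} {f g h k : hom B a b} (x : cell f g) (y : cell g h) (z : cell h k) :
  x >> y >> z = x >> (y >> z).
Proof. apply vcomp_assoc. Qed.
Lemma v1l {a b} {f g : hom B a b} (x : cell f g) : id2 f >> x = x.
Proof. apply vcomp_id_l. Qed.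
Lemma v1r {a b} {f g : hom B a b} (x : cell f g) : x >> id2 g = x.
Proof. apply vcomp_id_r. Qed.
Lemma h11 {a b c} (f : hom B a b) (g : hom B b c) : id2 f ** id2 g = id2 (hcomp1 f g).
Proof. apply hcomp2_id. Qed.
Lemma ich {a b c} {f f' f'' : hom B a b} {g g' g'' : hom B b c}
  (x : cell f f') (x' : cell f' f'') (y : cell g g') (y' : cell g' g'') :
  (x >> x') ** (y >> y') = (x ** y) >> (x' ** y').
Proof. apply interchange. Qed.

Lemma wl {a b c} {f : hom B a b} {g g' g'' : hom B b c} (y : cell g g') (y' : cell g' g'') :
  id2 f ** (y >> y') = (id2 f ** y) >> (id2 f ** y').
Proof. rewrite <- ich, v1l. reflexivity. Qed.
Lemma wr {a b c} {f f' f'' : hom B a b} {g : hom B b c} (x : cell f f') (x' : cell f' f'') :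
  (x >> x') ** id2 g = (x ** id2 g) >> (x' ** id2 g).
Proof. rewrite <- ich, v1l. reflexivity. Qed.
Lemma split_lr {a b c} {f f' : hom B a b} {g g' : hom B b c} (x : cell f f') (y : cell g g') :
  x ** y = (x ** id2 g) >> (id2 f' ** y).
Proof. rewrite <- ich, v1l, v1r. reflexivity. Qed.
Lemma split_rl {a b c} {f f' : hom B a b} {g g' : hom B b c} (x : cell f f') (y : cell g g') :
  x ** y = (id2 f ** y) >> (x ** id2 g').
Proof. rewrite <- ich, v1l, v1r. reflexivity. Qed.
Lemma wcomm {a b c} {f f' : hom B a b} {g g' : hom B b c} (x : cell f f') (y : cell g g') :
  (x ** id2 g) >> (id2 f' ** y) = (id2 f ** y) >> (x ** id2 g').
Proof. rewrite <- split_lr, <- split_rl. reflexivity. Qed.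

Lemma assoc_inv_nat {a b c d} {f f' : hom B a b} {g g' : hom B b c} {h h' : hom B c d}
  (x : cell f f') (y : cell g g') (z : cell h h') :
  (x ** (y ** z)) >> assoc_inv f' g' h' = assoc_inv f g h >> ((x ** y) ** z).
Proof.
  rewrite <- (v1l (x ** (y ** z))). rewrite <- (assoc_inv_r f g h).
  rewrite !vA. rewrite <- (vA (assoc f g h)), <- assoc_nat, !vA.
  rewrite assoc_inv_l, v1r. reflexivity.
Qed.
Lemma lunit_inv_nat {a b} {f f' : hom B a b} (x : cell f f') :
  x >> lunit_inv f' = lunit_inv f >> (id2 (id1 a) ** x).
Proof.
  rewrite <- (v1l x) at 1. rewrite <- (lunit_inv_r f), !vA.
  rewrite <- (vA (lunit f)), <- lunit_nat, !vA, lunit_inv_l, v1r. reflexivity.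
Qed.
Lemma runit_inv_nat {a b} {f f' : hom B a b} (x : cell f f') :
  x >> runit_inv f' = runit_inv f >> (x ** id2 (id1 b)).
Proof.
  rewrite <- (v1l x) at 1. rewrite <- (runit_inv_r f), !vA.
  rewrite <- (vA (runit f)), <- runit_nat, !vA, runit_inv_l, v1r. reflexivity.
Qed.

Lemma cancel_assoc_r {a b c d} {X : hom B a d} {f : hom B a b} {g : hom B b c} {h : hom B c d}
  (u v : cell X (hcomp1 (hcomp1 f g) h)) : u >> assoc f g h = v >> assoc f g h -> u = v.
Proof. intro H. rewrite <- (v1r u), <- (v1r v), <- (assoc_inv_l f g h), <- !vA, H. reflexivity. Qed.
Lemma cancel_runit_r {a b} {X : hom B a b} {f : hom B a b}
  (u v : cell X (hcomp1 f (id1 b))) : u >> runit f = v >> runit f -> u = v.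
Proof. intro H. rewrite <- (v1r u), <- (v1r v), <- (runit_inv_l f), <- !vA, H. reflexivity. Qed.

Lemma wr_id_faithful {a b} {f g : hom B a b} (x y : cell f g) :
  x ** id2 (id1 b) = y ** id2 (id1 b) -> x = y.
Proof.
  intro H.
  assert (E: forall z : cell f g, z = runit_inv f >> (z ** id2 (id1 b)) >> runit g).
  { intro z. rewrite vA, runit_nat, <- vA, runit_inv_r, v1l. reflexivity. }
  rewrite (E x), (E y), H. reflexivity.
Qed.
Lemma wl_id_faithful {a b} {f g : hom B a b} (x y : cell f g) :
  id2 (id1 a) ** x = id2 (id1 a) ** y -> x = y.
Proof.
  intro H.
  assert (E: forall z : cell f g, z = lunit_inv f >> (id2 (id1 a) ** z) >> lunit g).
  { intro z. rewrite vA, lunit_nat, <- vA, lunit_inv_r, v1l. reflexivity. }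
  rewrite (E x), (E y), H. reflexivity.
Qed.

Lemma kelly_r {a b c} (f : hom B a b) (g : hom B b c) :
  assoc f g (id1 c) >> (id2 f ** runit g) = runit (hcomp1 f g).
Proof.
  apply wr_id_faithful. apply cancel_assoc_r.
  rewrite wr, vA.
  rewrite assoc_nat.
  rewrite <- (triangle g (id1 c)).
  rewrite wl. rewrite <- (vA (assoc f _ _)), <- !vA.
  rewrite pentagon.
  rewrite vA. rewrite <- assoc_nat. rewrite h11.
  rewrite <- vA. rewrite triangle. reflexivity.
Qed.


Lemma inv_unique {a b} {f g : hom B a b} (p : cell f g) (u v : cell g f) :
  p >> u = id2 f -> v >> p = id2 g -> u = v.
Proof. intros H1 H2. rewrite <- (v1l u), <- H2, vA, H1, v1r. reflexivity. Qed.

Lemma pentagon_inv {a b c d e} (f : hom B a b) (g : hom B b c) (h : hom B c d) (k : hom B d e) :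
  assoc_inv f g (hcomp1 h k) >> assoc_inv (hcomp1 f g) h k
  = (id2 f ** assoc_inv g h k) >> assoc_inv f (hcomp1 g h) k >> (assoc_inv f g h ** id2 k).
Proof.
  apply (inv_unique (assoc (hcomp1 f g) h k >> assoc f g (hcomp1 h k))).
  - rewrite !vA. rewrite <- (vA (assoc f g _)), assoc_inv_l, v1l, assoc_inv_l. reflexivity.
  - rewrite <- pentagon. rewrite !vA.
    rewrite <- (vA (assoc_inv f g h ** id2 k)), <- wr, assoc_inv_r, h11, v1l.
    rewrite <- (vA (assoc_inv f (hcomp1 g h) k)), assoc_inv_r, v1l.
    rewrite <- wl, assoc_inv_r, h11. reflexivity.
Qed.

Lemma E_assoc {a0 a b c d} (X : hom B a0 a) (l : hom B a b) (k : hom B b c) (j : hom B c d)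
  {Y : hom B a0 b} {Z : hom B a0 c} {W : hom B a0 d}
  (A : cell (hcomp1 X l) Y) (Bc : cell (hcomp1 Y k) Z) (Cc : cell (hcomp1 Z j) W) :
  (id2 X ** assoc l k j) >> (assoc_inv X l (hcomp1 k j) >> (A ** id2 (hcomp1 k j)) >>
     (assoc_inv Y k j >> (Bc ** id2 j) >> Cc))
  = assoc_inv X (hcomp1 l k) j >> ((assoc_inv X l k >> (A ** id2 k) >> Bc) ** id2 j) >> Cc.
Proof.
  rewrite <- (h11 k j). rewrite !vA.
  rewrite <- (vA (A ** _)). rewrite assoc_inv_nat.
  rewrite !wr. rewrite !vA.
  rewrite <- !(vA (id2 X ** assoc l k j)), <- (vA _ (assoc_inv _ _ _)).
  assert (P: (id2 X ** assoc l k j) >> assoc_inv X l (hcomp1 k j) >> assoc_inv (hcomp1 X l) k j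
     = assoc_inv X (hcomp1 l k) j >> (assoc_inv X l k ** id2 j)).
  { rewrite vA, pentagon_inv, <- !vA, <- wl, assoc_inv_l, h11, v1l. reflexivity. }
  rewrite P, !vA. reflexivity.
Qed.

Lemma E_assoc_inv {a0 a b c d} (X : hom B a0 a) (l : hom B a b) (k : hom B b c) (j : hom B c d)
  {Y : hom B a0 b} {Z : hom B a0 c} {W : hom B a0 d}
  (A : cell (hcomp1 X l) Y) (Bc : cell (hcomp1 Y k) Z) (Cc : cell (hcomp1 Z j) W) :
  (id2 X ** assoc_inv l k j) >>
     (assoc_inv X (hcomp1 l k) j >> ((assoc_inv X l k >> (A ** id2 k) >> Bc) ** id2 j) >> Cc)
  = assoc_inv X l (hcomp1 k j) >> (A ** id2 (hcomp1 k j)) >>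
     (assoc_inv Y k j >> (Bc ** id2 j) >> Cc).
Proof.
  rewrite <- E_assoc. rewrite <- vA, <- wl, assoc_inv_r, h11, v1l. reflexivity.
Qed.

Lemma E_lunit {a0 a b} (X : hom B a0 a) (l : hom B a b) {Y : hom B a0 b}
  (A : cell (hcomp1 X l) Y) :
  (id2 X ** lunit l) >> A = assoc_inv X (id1 a) l >> (runit X ** id2 l) >> A.
Proof.
  rewrite <- triangle, <- (vA (assoc_inv _ _ _)), assoc_inv_r, v1l. reflexivity.
Qed.

Lemma E_lunit_inv {a0 a b} (X : hom B a0 a) (l : hom B a b) {Y : hom B a0 b}
  (A : cell (hcomp1 X l) Y) :
  (id2 X ** lunit_inv l) >> (assoc_inv X (id1 a) l >> (runit X ** id2 l) >> A) = A.
Proof.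
  rewrite <- E_lunit, <- vA, <- wl, lunit_inv_r, h11, v1l. reflexivity.
Qed.

Lemma E_runit {a0 a b} (X : hom B a0 a) (l : hom B a b) {Y : hom B a0 b}
  (A : cell (hcomp1 X l) Y) :
  (id2 X ** runit l) >> A = assoc_inv X l (id1 b) >> (A ** id2 (id1 b)) >> runit Y.
Proof.
  rewrite vA, runit_nat, <- kelly_r, <- !vA, assoc_inv_r, v1l. reflexivity.
Qed.

Lemma E_runit_inv {a0 a b} (X : hom B a0 a) (l : hom B a b) {Y : hom B a0 b}
  (A : cell (hcomp1 X l) Y) :
  (id2 X ** runit_inv l) >> (assoc_inv X l (id1 b) >> (A ** id2 (id1 b)) >> runit Y) = A.
Proof.
  rewrite <- E_runit, <- vA, <- wl, runit_inv_r, h11, v1l. reflexivity.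
Qed.

Lemma rinv_comp {a0 a b c} (X : hom B a0 a) (l : hom B a b) (k : hom B b c)
  {Y : hom B a0 b} {Z : hom B a0 c}
  (A : cell (hcomp1 X l) Y) (Bc : cell (hcomp1 Y k) Z) (a' : cell Y (hcomp1 X l)) (b' : cell Z (hcomp1 Y k)) :
  A >> a' = id2 _ -> Bc >> b' = id2 _ ->
  assoc_inv X l k >> (A ** id2 k) >> Bc >> (b' >> (a' ** id2 k) >> assoc X l k) = id2 _.
Proof.
  intros H1 H2. rewrite !vA. rewrite <- (vA Bc), H2, v1l.
  rewrite <- (vA (A ** _)), <- wr, H1, h11, v1l, assoc_inv_r. reflexivity.
Qed.

End Gen.


Ltac inv_ex := repeat match goal with
 | H : existT _ ?x _ = existT _ ?x _ |- _ => apply Eqdep.EqdepTheory.inj_pair2 in H; subst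
 | H : existT _ ?x _ = existT _ ?y _ |- _ =>
     first [is_var x | is_var y];
     let E := fresh in assert (E := f_equal (@projT1 _ _) H); simpl in E; subst
 | H : existT _ ?x _ = existT _ ?y _ |- _ =>
     let E := fresh in assert (E := f_equal (@projT1 _ _) H); simpl in E;
     injection E; clear E; intros
end.

Section Lev1.
Variable C : Bicat.
Variable a0 : ob C.

Inductive RP1 : ob C -> Type :=
| r1nil : RP1 a0
| r1snoc : forall b c, RP1 b -> hom C b c -> RP1 c.
Arguments r1snoc {b c} _ _.

Fixpoint NC {a} (S : RP1 a) : hom C a0 a :=
  match S in RP1 a return hom C a0 a with
  | r1nil => id1 a0
  | r1snoc p e => hcomp1 (NC p) e
  end.

Fixpoint d1 {a b} (w : FWord (UG C) a b) : RP1 a -> RP1 b :=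
  match w in FWord _ a b return RP1 a -> RP1 b with
  | fedge e => fun S => r1snoc S e
  | funit _ => fun S => S
  | fcomp w v => fun S => d1 v (d1 w S)
  end.

Fixpoint rho1 {a b} (w : FWord (UG C) a b) : forall S : RP1 a,
  cell (hcomp1 (NC S) (evF1 w)) (NC (d1 w S)) :=
  match w in FWord _ a b return forall S : RP1 a, cell (hcomp1 (NC S) (evF1 w)) (NC (d1 w S)) with
  | fedge e => fun S => id2 _
  | funit _ => fun S => runit _
  | fcomp w v => fun S => assoc_inv _ _ _ >> (rho1 w S ** id2 _) >> rho1 v (d1 w S)
  end.

Inductive IsId : forall {a} (S S' : RP1 a), cell (NC S) (NC S') -> Prop :=
| isid_nil : IsId r1nil r1nil (id2 _)
| isid_snoc : forall b c (p p' : RP1 b) (e : hom C b c) t,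
    IsId p p' t -> IsId (r1snoc p e) (r1snoc p' e) (t ** id2 e).

Lemma IsId_refl : forall a (S : RP1 a), IsId S S (id2 _).
Proof.
  induction S. constructor. simpl. rewrite <- h11. constructor. auto.
Qed.

Lemma IsId_inv_gen : forall a (S S' : RP1 a) t, IsId S S' t ->
  match S as S0 in RP1 a1 return (forall S'' : RP1 a1, cell (NC S0) (NC S'') -> Prop) with
  | r1nil => fun S'' t => existT (fun S2 => cell (NC r1nil) (NC S2)) S'' t = existT _ r1nil (id2 _)
  | r1snoc p e => fun S'' t => exists p' t0, IsId p p' t0 /\
      existT (fun S2 => cell (NC (r1snoc p e)) (NC S2)) S'' t = existT _ (r1snoc p' e) (t0 ** id2 e)
  end S' t.
Proof. induction 1; simpl; eauto. Qed.

Lemma IsId_comp : forall a (S1 S2 : RP1 a) t1, IsId S1 S2 t1 ->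
  forall S3 t2, IsId S2 S3 t2 -> IsId S1 S3 (t1 >> t2).
Proof.
  induction 1; intros S3 t2 H2; apply IsId_inv_gen in H2; simpl in H2.
  - inv_ex. rewrite v1l. constructor.
  - destruct H2 as [p2 [t3 [H3 E]]]. inv_ex. cbn [NC]. rewrite <- ich, v1l. constructor. auto.
Qed.

Lemma IsId_det : forall a (S1 S2 : RP1 a) t1, IsId S1 S2 t1 -> forall t2, IsId S1 S2 t2 -> t1 = t2.
Proof.
  induction 1; intros t2 H2; apply IsId_inv_gen in H2; simpl in H2.
  - inv_ex. reflexivity.
  - destruct H2 as [p2 [t3 [H3 E]]]. inv_ex. f_equal. auto.
Qed.

Lemma rho1_nat : forall a b (w : FWord (UG C) a b) (S S' : RP1 a) t, IsId S S' t ->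
  exists t', IsId (d1 w S) (d1 w S') t' /\ (t ** id2 (evF1 w)) >> rho1 w S' = rho1 w S >> t'.
Proof.
  induction w; intros S S' t H; simpl.
  - exists (t ** id2 e). split. constructor; auto. rewrite v1l, v1r. reflexivity.
  - exists t. split; auto. apply runit_nat.
  - destruct (IHw1 _ _ _ H) as [t1 [H1 E1]].
    destruct (IHw2 _ _ _ H1) as [t2 [H2 E2]].
    exists t2. split; auto.
    rewrite <- h11, !vA, <- (vA (t ** _)), assoc_inv_nat, !vA, <- (vA ((t ** _) ** _)), <- wr, E1, wr, !vA, E2. reflexivity.
Qed.

Lemma rho1_main : forall a b (w w' : FWord (UG C) a b) (x : FCell w w') (S : RP1 a),
  exists t, IsId (d1 w S) (d1 w' S) t /\ (id2 (NC S) ** evF2 x) >> rho1 w' S = rho1 w S >> t.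
Proof.
  induction x; intros S; simpl.
  - exists (id2 _). split. apply IsId_refl. rewrite h11, v1l, v1r. reflexivity.
  - destruct (IHx1 S) as [t1 [H1 E1]]. destruct (IHx2 S) as [t2 [H2 E2]].
    exists (t1 >> t2). split. eapply IsId_comp; eauto.
    rewrite wl, vA, E2, <- vA, E1, vA. reflexivity.
  - destruct (IHx1 S) as [t1 [H1 E1]]. destruct (IHx2 (d1 w S)) as [t2 [H2 E2]].
    destruct (rho1_nat _ _ v' _ _ _ H1) as [t3 [H3 E3]].
    exists (t2 >> t3). split. eapply IsId_comp; eauto.
    rewrite !vA, <- (vA (id2 _ ** _)), assoc_inv_nat, (split_lr (id2 (NC S) ** evF2 x1)), !vA.
    rewrite <- (vA (id2 _ ** evF2 x2)), <- wcomm.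
    rewrite !vA, <- (vA ((id2 _ ** evF2 x1) ** _)), <- wr, E1, wr, !vA.
    rewrite <- (vA (t1 ** _)), wcomm, !vA, E3, <- (vA (id2 _ ** evF2 x2)), E2, !vA. reflexivity.
  - exists (id2 _). split. apply IsId_refl. rewrite v1r. apply E_assoc.
  - exists (id2 _). split. apply IsId_refl. rewrite v1r. apply E_assoc_inv.
  - exists (id2 _). split. apply IsId_refl. rewrite v1r. apply E_lunit.
  - exists (id2 _). split. apply IsId_refl. rewrite v1r. apply E_lunit_inv.
  - exists (id2 _). split. apply IsId_refl. rewrite v1r. apply E_runit.
  - exists (id2 _). split. apply IsId_refl. rewrite v1r. apply E_runit_inv.
Qed.

Lemma rho1_rinv : forall a b (w : FWord (UG C) a b) (S : RP1 a),
  exists r, rho1 w S >> r = id2 _.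
Proof.
  induction w; intros S; simpl.
  - exists (id2 _). apply v1l.
  - exists (runit_inv _). apply runit_inv_l.
  - destruct (IHw1 S) as [r1 H1]. destruct (IHw2 (d1 w1 S)) as [r2 H2].
    eexists. apply rinv_comp; eauto.
Qed.

End Lev1.

Lemma coherence1 (C : Bicat) (a b : ob C) (w w' : FWord (UG C) a b) (x y : FCell w w') :
  evF2 x = evF2 y.
Proof.
  destruct (rho1_main C a _ _ w w' x (r1nil C a)) as [t1 [H1 E1]].
  destruct (rho1_main C a _ _ w w' y (r1nil C a)) as [t2 [H2 E2]].
  rewrite (IsId_det _ _ _ _ _ _ H1 _ H2) in E1.
  rewrite <- E2 in E1.
  destruct (rho1_rinv C a _ _ w' (r1nil C a)) as [r Hr].
  assert (E: id2 (NC C a (r1nil C a)) ** evF2 x = id2 (NC C a (r1nil C a)) ** evF2 y).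
  { transitivity ((id2 (NC C a (r1nil C a)) ** evF2 x) >> rho1 C a w' (r1nil C a) >> r).
    - rewrite vA, Hr, v1r. reflexivity.
    - rewrite E1, vA, Hr, v1r. reflexivity. }
  apply wl_id_faithful in E. exact E.
Qed.

Fixpoint srt (m : nat) (gs : list nat) : Prop :=
  match gs with nil => True | g :: gs => m <= g /\ srt g gs end.
Fixpoint lastn (m : nat) (gs : list nat) : nat :=
  match gs with nil => m | g :: gs => lastn g gs end.

Lemma srt_app : forall g1 m g2, srt m (g1 ++ g2) <-> srt m g1 /\ srt (lastn m g1) g2.
Proof. induction g1; simpl; intros. tauto. rewrite IHg1. tauto. Qed.
Lemma lastn_app : forall g1 m g2, lastn m (g1 ++ g2) = lastn (lastn m g1) g2.
Proof. induction g1; simpl; auto. Qed.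
Lemma srt_weaken : forall gs m m', m' <= m -> srt m gs -> srt m' gs.
Proof. destruct gs; simpl; intros; auto. split. lia. tauto. Qed.

Lemma srt_firstn : forall n gs m, srt m gs -> srt m (firstn n gs).
Proof. intros. rewrite <- (firstn_skipn n gs) in H. apply srt_app in H. tauto. Qed.
Lemma srt_skipn : forall n gs m, srt m gs -> srt (lastn m (firstn n gs)) (skipn n gs).
Proof. intros. rewrite <- (firstn_skipn n gs) in H. apply srt_app in H. tauto. Qed.

Lemma srt_nth : forall gs m, srt m gs <->
  (forall i, i < length gs -> m <= nth i gs 0) /\
  (forall i j, i <= j -> j < length gs -> nth i gs 0 <= nth j gs 0).
Proof.
  induction gs; simpl; intros.
  - split; auto. intros. split; intros; lia.
  - rewrite IHgs. split.
    + intros [H1 [H2 H3]]. split.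
      * intros [|i] Hi. auto. specialize (H2 i). lia.
      * intros [|i] [|j] Hij Hj; try lia. apply H2. lia. apply H3; lia.
    + intros [H1 H2]. split. apply (H1 0). lia. split.
      * intros i Hi. apply (H2 0 (S i)); lia.
      * intros i j Hij Hj. apply (H2 (S i) (S j)); lia.
Qed.

Lemma nth_map_seq : forall (f : nat -> nat) n s k, k < n -> nth k (map f (seq s n)) 0 = f (s + k).
Proof.
  induction n; intros s k Hk. lia. destruct k; simpl. f_equal; lia.
  rewrite IHn by lia. f_equal. lia.
Qed.

Lemma map_seq_shift : forall (f : nat -> nat) n s, map f (seq s n) = map (fun i => f (s + i)) (seq 0 n).
Proof.
  intros f n. revert f. induction n; intros f s. reflexivity. simpl. rewrite Nat.add_0_r. f_equal.
  rewrite IHn, (IHn (fun i => f (s + i)) 1). apply map_ext. intros. f_equal. lia.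
Qed.

Lemma map_nth_seq_id : forall gs n, length gs = n -> map (fun i => nth i gs 0) (seq 0 n) = gs.
Proof.
  induction gs; intros n H; subst; simpl. reflexivity. f_equal.
  rewrite map_seq_shift. simpl. apply IHgs. reflexivity.
Qed.

Lemma firstn_app_l : forall (l1 l2 : list nat) n, n = length l1 -> firstn n (l1 ++ l2) = l1.
Proof. induction l1; intros; subst; simpl; auto. f_equal. auto. Qed.
Lemma skipn_app_l : forall (l1 l2 : list nat) n, n = length l1 -> skipn n (l1 ++ l2) = l2.
Proof. induction l1; intros; subst; simpl; auto. Qed.
Lemma nth_skipn' : forall (l : list nat) m n, nth n (skipn m l) 0 = nth (m + n) l 0.
Proof. induction l; intros [|m] n; simpl; auto. destruct n; auto. Qed.
Lemma nth_firstn' : forall (l : list nat) m n, n < m -> nth n (firstn m l) 0 = nth n l 0.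
Proof. induction l; intros [|m] [|n] H; simpl; auto; try lia. apply IHl. lia. Qed.

Lemma supp_bound : forall G a b (l l' : LWord G a b) (phi : LCell l l') i,
  i < nphi l -> supp phi i < nphi l'.
Proof.
  induction phi; intros i Hi; simpl in *; try lia; auto.
  destruct (Nat.ltb_spec i (nphi l)).
  - specialize (IHphi1 i H). lia.
  - specialize (IHphi2 (i - nphi l)). lia.
Qed.

Lemma supp_mono : forall G a b (l l' : LWord G a b) (phi : LCell l l') i0 j0,
  i0 <= j0 -> j0 < nphi l -> supp phi i0 <= supp phi j0.
Proof.
  induction phi; intros i0 j0 Hij Hj; simpl in *; try lia; auto.
  - apply IHphi2. apply IHphi1; lia. apply supp_bound. lia.
  - destruct (Nat.ltb_spec i0 (nphi l)), (Nat.ltb_spec j0 (nphi l)); try lia.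
    + apply IHphi1; lia.
    + pose proof (supp_bound _ _ _ _ _ phi1 i0 H). lia.
    + assert (supp phi2 (i0 - nphi l) <= supp phi2 (j0 - nphi l)) by (apply IHphi2; lia). lia.
Qed.

Definition pull {G a b} {l l' : LWord G a b} (phi : LCell l l') (gs : list nat) : list nat :=
  map (fun i => nth (supp phi i) gs 0) (seq 0 (nphi l)).

Lemma pull_len : forall G a b (l l' : LWord G a b) (phi : LCell l l') gs, length (pull phi gs) = nphi l.
Proof. intros. unfold pull. rewrite length_map, length_seq. reflexivity. Qed.

Lemma pull_srt : forall G a b (l l' : LWord G a b) (phi : LCell l l') gs m,
  length gs = nphi l' -> srt m gs -> srt m (pull phi gs).
Proof.
  intros. apply srt_nth in H0. destruct H0 as [H1 H2]. apply srt_nth. rewrite pull_len. split.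
  - intros i Hi. unfold pull. rewrite nth_map_seq by auto. apply H1.
    rewrite H. apply supp_bound. simpl. lia.
  - intros i j Hij Hj. unfold pull. rewrite !nth_map_seq by lia. apply H2.
    apply supp_mono; simpl; lia. rewrite H. apply supp_bound. simpl. lia.
Qed.

Lemma pull_comp : forall G a b (l l' l'' : LWord G a b) (x : LCell l l') (y : LCell l' l'') gs,
  pull (lc_v _ _ _ _ _ _ x y) gs = pull x (pull y gs).
Proof.
  intros. unfold pull at 1 2. apply map_ext_in. intros i Hi. apply in_seq in Hi.
  simpl. unfold pull. rewrite nth_map_seq. reflexivity. apply supp_bound. lia.
Qed.

Lemma pull_h_first : forall G a b c (l l' : LWord G a b) (k k' : LWord G b c) (x : LCell l l') (y : LCell k k') gs,
  firstn (nphi l) (pull (lc_h _ _ _ _ _ _ _ _ x y) gs) = pull x (firstn (nphi l') gs).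
Proof.
  intros. unfold pull. simpl nphi. rewrite seq_app, map_app.
  rewrite firstn_app_l by (rewrite length_map, length_seq; reflexivity).
  apply map_ext_in. intros i Hi. apply in_seq in Hi. simpl.
  destruct (Nat.ltb_spec i (nphi l)); try lia.
  rewrite nth_firstn'. reflexivity. apply supp_bound. lia.
Qed.

Lemma pull_h_skip : forall G a b c (l l' : LWord G a b) (k k' : LWord G b c) (x : LCell l l') (y : LCell k k') gs,
  skipn (nphi l) (pull (lc_h _ _ _ _ _ _ _ _ x y) gs) = pull y (skipn (nphi l') gs).
Proof.
  intros. unfold pull. simpl nphi. rewrite seq_app, map_app.
  rewrite skipn_app_l by (rewrite length_map, length_seq; reflexivity).
  rewrite map_seq_shift. simpl. apply map_ext_in. intros i Hi. apply in_seq in Hi.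
  destruct (Nat.ltb_spec (nphi l + i) (nphi l)); try lia.
  rewrite nth_skipn'. do 3 f_equal. lia.
Qed.

Lemma firstn_firstn_add : forall (l : list nat) a b, firstn a (firstn (a + b) l) = firstn a l.
Proof. intros. rewrite firstn_firstn. f_equal. lia. Qed.
Lemma skipn_firstn_add : forall (l : list nat) a b, skipn a (firstn (a + b) l) = firstn b (skipn a l).
Proof. induction l; intros [|a'] b; simpl; auto. destruct b; auto. Qed.
Lemma skipn_add : forall (l : list nat) a b, skipn (a + b) l = skipn b (skipn a l).
Proof. induction l; intros [|a'] b; simpl; auto. destruct b; auto. Qed.

Section Lev2.
Context {C D : Bicat} (F : LaxFunctor C D) (a0 : ob C).

Inductive RP : ob C -> Type :=
| rnil : RP a0
| rsnoc : forall b c, RP b -> FWord (UG C) b c -> RP c.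
Arguments rsnoc {b c} _ _.

Local Notation FF w := (F1 F (evF1 w)).
Local Notation FX x := (F2 F (evF2 x)).

Fixpoint ND {a} (S : RP a) : hom D (F0 F a0) (F0 F a) :=
  match S in RP a return hom D (F0 F a0) (F0 F a) with
  | rnil => id1 _
  | rsnoc p c => hcomp1 (ND p) (FF c)
  end.

Fixpoint len {a} (S : RP a) : nat :=
  match S with rnil => 0 | rsnoc p _ => Datatypes.S (len p) end.

Fixpoint pad (n : nat) {a} (S : RP a) : RP a :=
  match n with 0 => S | Datatypes.S n => rsnoc (pad n S) (funit (G:=UG C) a) end.

Fixpoint padC (n : nat) {a} (S : RP a) : cell (ND S) (ND (pad n S)) :=
  match n return cell (ND S) (ND (pad n S)) with
  | 0 => id2 _
  | Datatypes.S n => padC n S >> runit_inv _ >> (id2 _ ** lax_i F a)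
  end.

Definition step {b c} (S : RP b) (w : FWord (UG C) b c) (g : nat) : RP c :=
  match S in RP b return FWord (UG C) b c -> RP c with
  | rnil => fun w => rsnoc (pad g rnil) w
  | rsnoc p c0 => fun w => if g <? Datatypes.S (len p) then rsnoc p (fcomp c0 w)
                          else rsnoc (pad (g - Datatypes.S (len p)) (rsnoc p c0)) w
  end w.

Definition stepC {b c} (S : RP b) (w : FWord (UG C) b c) (g : nat) :
  cell (hcomp1 (ND S) (FF w)) (ND (step S w g)) :=
  match S as S0 in RP b return forall w : FWord (UG C) b c, cell (hcomp1 (ND S0) (FF w)) (ND (step S0 w g)) with
  | rnil => fun w => padC g rnil ** id2 _
  | rsnoc p c0 => fun w =>
      match (g <? Datatypes.S (len p)) as bb return
        cell (hcomp1 (ND (rsnoc p c0)) (FF w))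
          (ND (if bb then rsnoc p (fcomp c0 w) else rsnoc (pad (g - Datatypes.S (len p)) (rsnoc p c0)) w)) with
      | true => assoc _ _ _ >> (id2 _ ** lax_m F _ _)
      | false => padC _ _ ** id2 _
      end
  end w.

Fixpoint dl {a b} (l : LWord (UG C) a b) : RP a -> list nat -> RP b :=
  match l in LWord _ a b return RP a -> list nat -> RP b with
  | lphi w => fun S gs => step S w (hd 0 gs)
  | lunitw _ => fun S gs => S
  | lcomp l k => fun S gs => dl k (dl l S (firstn (nphi l) gs)) (skipn (nphi l) gs)
  end.

Fixpoint Can {a b} (l : LWord (UG C) a b) : forall (S : RP a) gs,
  cell (hcomp1 (ND S) (evL1 F l)) (ND (dl l S gs)) :=
  match l in LWord _ a b return forall (S : RP a) gs, cell (hcomp1 (ND S) (evL1 F l)) (ND (dl l S gs)) with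
  | lphi w => fun S gs => stepC S w (hd 0 gs)
  | lunitw _ => fun S gs => runit _
  | lcomp l k => fun S gs => assoc_inv _ _ _ >> (Can l S (firstn (nphi l) gs) ** id2 _)
                              >> Can k (dl l S (firstn (nphi l) gs)) (skipn (nphi l) gs)
  end.

Inductive IsStr : forall {a} (S S' : RP a), cell (ND S) (ND S') -> Prop :=
| is_nil : IsStr rnil rnil (id2 _)
| is_snoc : forall b c (p p' : RP b) (c0 c1 : FWord (UG C) b c) t (x : FCell c0 c1),
    IsStr p p' t -> IsStr (rsnoc p c0) (rsnoc p' c1) (t ** FX x).

Inductive IsStrT : forall {a} (S S' : RP a), cell (ND S) (ND S') -> Prop :=
| it_str : forall a (S S' : RP a) t, IsStr S S' t -> IsStrT S S' t
| it_snoc : forall b (S p' : RP b) (c : FWord (UG C) b b) t (x : FCell (funit (G:=UG C) b) c),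
    IsStrT S p' t -> IsStrT S (rsnoc p' c) (t >> runit_inv _ >> (id2 _ ** (lax_i F b >> FX x))).

Lemma IsStr_inv_gen : forall a (S S' : RP a) t, IsStr S S' t ->
  match S as S0 in RP a1 return (forall S'' : RP a1, cell (ND S0) (ND S'') -> Prop) with
  | rnil => fun S'' t => existT (fun S2 => cell (ND rnil) (ND S2)) S'' t = existT _ rnil (id2 _)
  | rsnoc p c0 => fun S'' t => exists p' c1 t0 (x : FCell c0 c1), IsStr p p' t0 /\
      existT (fun S2 => cell (ND (rsnoc p c0)) (ND S2)) S'' t = existT _ (rsnoc p' c1) (t0 ** FX x)
  end S' t.
Proof. induction 1; simpl; eauto 7. Qed.

Lemma IsStr_len : forall a (S S' : RP a) t, IsStr S S' t -> len S = len S'.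
Proof. induction 1; simpl; auto. Qed.

Lemma IsStrT_len : forall a (S S' : RP a) t, IsStrT S S' t -> len S <= len S'.
Proof. induction 1; simpl. apply IsStr_len in H. lia. lia. Qed.

Lemma FX_coh {a b} (w w' : FWord (UG C) a b) (x y : FCell w w') : FX x = FX y.
Proof. rewrite (coherence1 C a b w w' x y). reflexivity. Qed.

Lemma IsStr_det : forall a (S1 S2 : RP a) t1, IsStr S1 S2 t1 -> forall t2, IsStr S1 S2 t2 -> t1 = t2.
Proof.
  induction 1; intros t2 H2; apply IsStr_inv_gen in H2; simpl in H2.
  - inv_ex. reflexivity.
  - destruct H2 as [p2 [c2 [t3 [x3 [H3 E]]]]]. inv_ex. f_equal. auto. apply FX_coh.
Qed.

Lemma IsStrT_inv : forall a (S S' : RP a) t, IsStrT S S' t ->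
  IsStr S S' t \/ exists p' (c : FWord (UG C) a a) (x : FCell (funit (G:=UG C) a) c) t0, IsStrT S p' t0 /\
   existT (fun S2 => cell (ND S) (ND S2)) S' t
   = existT _ (rsnoc p' c) (t0 >> runit_inv _ >> (id2 _ ** (lax_i F a >> FX x))).
Proof. destruct 1; eauto 8. Qed.

Lemma IsStrT_det : forall a (S1 S2 : RP a) t1, IsStrT S1 S2 t1 -> forall t2, IsStrT S1 S2 t2 -> t1 = t2.
Proof.
  induction 1; intros t2 H2; apply IsStrT_inv in H2; destruct H2 as [H2 | [p2 [c2 [x2 [t3 [H3 E]]]]]].
  - eapply IsStr_det; eauto.
  - inv_ex. apply IsStr_len in H. apply IsStrT_len in H3. simpl in H. lia.
  - apply IsStr_len in H2. apply IsStrT_len in H. simpl in H2. lia.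
  - inv_ex. rewrite (IHIsStrT _ H3). rewrite (FX_coh _ _ x x2). reflexivity.
Qed.


Lemma FX_id {a b} (w : FWord (UG C) a b) : FX (fc_id _ _ _ w) = id2 _.
Proof. simpl. apply F2_id. Qed.
Lemma FX_v {a b} {w w' w'' : FWord (UG C) a b} (x : FCell w w') (y : FCell w' w'') :
  FX (fc_v _ _ _ _ _ _ x y) = FX x >> FX y.
Proof. simpl. apply F2_comp. Qed.

Lemma IsStr_refl : forall a (S : RP a), IsStr S S (id2 _).
Proof.
  induction S. constructor.
  replace (id2 (ND (rsnoc S f))) with (id2 (ND S) ** FX (fc_id _ _ _ f)).
  constructor; auto. rewrite FX_id. apply h11.
Qed.

Lemma IsStrT_refl : forall a (S : RP a), IsStrT S S (id2 _).
Proof. intros. constructor. apply IsStr_refl. Qed.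

Lemma IsStr_comp : forall a (S1 S2 : RP a) t1, IsStr S1 S2 t1 ->
  forall S3 t2, IsStr S2 S3 t2 -> IsStr S1 S3 (t1 >> t2).
Proof.
  induction 1; intros S3 t2 H2; apply IsStr_inv_gen in H2; simpl in H2.
  - inv_ex. rewrite v1l. constructor.
  - destruct H2 as [p2 [c2 [t3 [x3 [H3 E]]]]]. inv_ex. cbn [ND].
    rewrite <- ich, <- FX_v. constructor. auto.
Qed.

Lemma runit_inv_whisk {a b} (X X' : hom D a b) (s : cell X X') {Y : hom D b b}
  (u : cell (id1 b) Y) {Y' : hom D b b} (v : cell Y Y') :
  runit_inv X >> ((id2 X ** u) >> (s ** v)) = s >> (runit_inv X' >> (id2 X' ** (u >> v))).
Proof.
  rewrite <- ich, v1l, (split_lr s), <- vA, <- runit_inv_nat, !vA. reflexivity.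
Qed.

Lemma IsStrT_comp0 : forall a (A B : RP a) t1, IsStrT A B t1 ->
  forall C' t2, IsStr B C' t2 -> IsStrT A C' (t1 >> t2).
Proof.
  induction 1; intros C' t2 H2.
  - constructor. eapply IsStr_comp; eauto.
  - apply IsStr_inv_gen in H2. simpl in H2.
    destruct H2 as [p2 [c2 [t3 [x3 [H3 E]]]]]. inv_ex. cbn [ND].
    pose proof (it_snoc _ _ _ _ _ (fc_v _ _ _ _ _ _ x x3) (IHIsStrT _ _ H3)) as K.
    rewrite FX_v in K. rewrite !vA in K. rewrite !vA, runit_inv_whisk, !vA. exact K.
Qed.

Lemma IsStrT_comp : forall a (B C' : RP a) t2, IsStrT B C' t2 ->
  forall A t1, IsStrT A B t1 -> IsStrT A C' (t1 >> t2).
Proof.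
  induction 1; intros A0 t1 H1.
  - eapply IsStrT_comp0; eauto.
  - rewrite <- !vA. apply it_snoc. auto.
Qed.

Lemma len_pad : forall n a (S : RP a), len (pad n S) = n + len S.
Proof. induction n; simpl; auto. Qed.

Lemma IsStrT_pad : forall n a (S : RP a), IsStrT S (pad n S) (padC n S).
Proof.
  induction n; intros; simpl. apply IsStrT_refl.
  replace (padC n S >> runit_inv (ND (pad n S)) >> (id2 (ND (pad n S)) ** lax_i F a))
   with (padC n S >> runit_inv (ND (pad n S)) >> (id2 (ND (pad n S)) ** (lax_i F a >> FX (fc_id _ _ _ (funit (G:=UG C) a))))).
  apply it_snoc. auto. rewrite FX_id, v1r. reflexivity.
Qed.

Lemma saturate : forall a (S S' : RP a) t, IsStrT S S' t -> forall n, len (pad n S) = len S' ->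
  exists s, IsStr (pad n S) S' s /\ padC n S >> s = t.
Proof.
  induction 1; intros n Hn.
  - destruct n. exists t. split; auto. apply v1l.
    apply IsStr_len in H. rewrite len_pad in Hn. lia.
  - destruct n.
    + apply IsStrT_len in H. simpl in Hn. lia.
    + simpl in Hn. injection Hn; intro Hn'.
      destruct (IHIsStrT n Hn') as [s [Hs Es]].
      exists (s ** FX x). split. simpl. constructor. auto.
      simpl. rewrite !vA, runit_inv_whisk, <- (vA (padC n S)), Es. reflexivity.
Qed.

Lemma step_merge {b c d} (p : RP b) (c0 : FWord (UG C) b c) (w : FWord (UG C) c d) g :
  g < Datatypes.S (len p) ->
  existT (fun T => cell (hcomp1 (ND (rsnoc p c0)) (FF w)) (ND T)) (step (rsnoc p c0) w g) (stepC (rsnoc p c0) w g)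
  = existT _ (rsnoc p (fcomp c0 w)) (assoc _ _ _ >> (id2 _ ** lax_m F _ _)).
Proof.
  intro H. unfold step, stepC. apply Nat.ltb_lt in H. rewrite H. reflexivity.
Qed.

Lemma step_new {b c} (S : RP b) (w : FWord (UG C) b c) g :
  len S <= g ->
  existT (fun T => cell (hcomp1 (ND S) (FF w)) (ND T)) (step S w g) (stepC S w g)
  = existT _ (rsnoc (pad (g - len S) S) w) (padC (g - len S) S ** id2 _).
Proof.
  intro H. destruct S.
  - simpl. rewrite Nat.sub_0_r. reflexivity.
  - unfold step, stepC. assert (H' : (g <? Datatypes.S (len S)) = false).
    { apply Nat.ltb_ge. simpl in H. lia. }
    rewrite H'. reflexivity.
Qed.


Lemma lax_lunit' {b d} (w : hom C b d) :
  lunit_inv (F1 F w) >> ((lax_i F b ** id2 (F1 F w)) >> lax_m F (id1 b) w) = F2 F (lunit_inv w).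
Proof.
  assert (E: F2 F (lunit w) >> F2 F (lunit_inv w) = id2 _) by (rewrite <- F2_comp, lunit_inv_l, F2_id; reflexivity).
  rewrite <- (v1r (lunit_inv (F1 F w) >> _)), <- E, !vA.
  rewrite <- (vA (_ ** _) (lax_m F _ _)), <- (vA ((_ ** _) >> _)), lax_lunit, <- vA, lunit_inv_r, v1l.
  reflexivity.
Qed.

Lemma lax_runit' {b d} (w : hom C b d) :
  (id2 (F1 F w) ** lax_i F d) >> lax_m F w (id1 d) = runit (F1 F w) >> F2 F (runit_inv w).
Proof.
  assert (E: F2 F (runit w) >> F2 F (runit_inv w) = id2 _) by (rewrite <- F2_comp, runit_inv_l, F2_id; reflexivity).
  rewrite <- (v1r (_ >> lax_m F _ _)), <- E, <- !vA, lax_runit. reflexivity.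
Qed.

Lemma triangle_inv {a b c} (f : hom D a b) (g : hom D b c) :
  (runit_inv f ** id2 g) >> assoc f (id1 b) g = id2 f ** lunit_inv g.
Proof.
  rewrite <- (v1r (_ >> _)), <- (h11 f (hcomp1 (id1 b) g)), <- (lunit_inv_l g), wl, <- !vA.
  rewrite (vA _ (assoc _ _ _)), triangle, <- wr, runit_inv_r, h11, v1l. reflexivity.
Qed.


Lemma mnat_l {b c d} {f f' : hom C b c} (x : cell f f') (g : hom C c d) :
  (F2 F x ** id2 (F1 F g)) >> lax_m F f' g = lax_m F f g >> F2 F (x ** id2 g).
Proof. rewrite <- (F2_id F g), lax_m_nat. reflexivity. Qed.
Lemma mnat_r {b c d} (f : hom C b c) {g g' : hom C c d} (y : cell g g') :
  (id2 (F1 F f) ** F2 F y) >> lax_m F f g' = lax_m F f g >> F2 F (id2 f ** y).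
Proof. rewrite <- (F2_id F f), lax_m_nat. reflexivity. Qed.

Lemma G_merge_unit {x b d} (X : hom D x (F0 F b)) (c : FWord (UG C) b b)
  (xx : FCell (funit (G:=UG C) b) c) (w : FWord (UG C) b d) :
  ((runit_inv X >> (id2 X ** (lax_i F b >> FX xx))) ** id2 (FF w)) >>
    (assoc X (FF c) (FF w) >> (id2 X ** lax_m F (evF1 c) (evF1 w)))
  = id2 X ** FX (fc_v _ _ _ _ _ _ (fc_lunit_inv _ _ _ w) (fc_h _ _ _ _ _ _ _ _ xx (fc_id _ _ _ w))).
Proof.
  simpl. rewrite F2_comp.
  rewrite wr, !vA, <- (vA ((id2 X ** _) ** _)), assoc_nat, !vA, <- (vA (runit_inv X ** _)), triangle_inv.
  rewrite <- !wl. f_equal.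
  rewrite wr, !vA, mnat_l, <- !vA. simpl. rewrite (vA (lunit_inv _)), lax_lunit'. reflexivity.
Qed.

Lemma G_i_merge {x b' b} (X : hom D x (F0 F b')) (c0 : FWord (UG C) b' b) :
  (id2 (hcomp1 X (FF c0)) ** lax_i F b) >>
    (assoc X (FF c0) (F1 F (id1 b)) >> (id2 X ** lax_m F (evF1 c0) (id1 b)))
  = runit (hcomp1 X (FF c0)) >> (id2 X ** FX (fc_runit_inv _ _ _ c0)).
Proof.
  simpl. rewrite <- h11, <- vA, assoc_nat, vA, <- wl, lax_runit', wl, <- vA, kelly_r. reflexivity.
Qed.

Lemma G_i_new {x b} {Y Y' : hom D x (F0 F b)} (P : cell Y Y') :
  (id2 Y ** lax_i F b) >> (P ** id2 (F1 F (id1 b)))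
  = runit Y >> (P >> runit_inv Y' >> (id2 Y' ** (lax_i F b >> FX (fc_id _ _ _ (funit (G:=UG C) b))))).
Proof.
  rewrite FX_id, v1r, <- wcomm.
  assert (E: P ** id2 (id1 (F0 F b)) = runit Y >> P >> runit_inv Y').
  { rewrite vA, runit_inv_nat, <- vA, runit_inv_l, v1l. reflexivity. }
  rewrite E, !vA. reflexivity.
Qed.

Lemma G_m_merge {x b' b c d} (X : hom D x (F0 F b')) (c0 : FWord (UG C) b' b)
  (w : FWord (UG C) b c) (v : FWord (UG C) c d) :
  (id2 (hcomp1 X (FF c0)) ** lax_m F (evF1 w) (evF1 v)) >>
    (assoc X (FF c0) (F1 F (hcomp1 (evF1 w) (evF1 v))) >> (id2 X ** lax_m F (evF1 c0) (hcomp1 (evF1 w) (evF1 v))))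
  = assoc_inv (hcomp1 X (FF c0)) (FF w) (FF v) >>
      ((assoc X (FF c0) (FF w) >> (id2 X ** lax_m F (evF1 c0) (evF1 w))) ** id2 (FF v)) >>
      (assoc X (F1 F (hcomp1 (evF1 c0) (evF1 w))) (FF v) >> (id2 X ** lax_m F (hcomp1 (evF1 c0) (evF1 w)) (evF1 v)))
    >> (id2 X ** FX (fc_assoc _ _ _ _ _ c0 w v)).
Proof.
  change (F2 F (evF2 (fc_assoc _ _ _ _ _ c0 w v))) with (F2 F (assoc (evF1 c0) (evF1 w) (evF1 v))).
  rewrite wr, !vA, <- (vA ((id2 X ** _) ** _)), assoc_nat, !vA, <- !wl.
  rewrite <- (vA (lax_m F _ _ ** _)), lax_assoc.
  rewrite !wl, !vA.
  rewrite <- (vA (assoc X _ _ ** id2 _) (assoc X _ _)).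
  rewrite <- (vA ((assoc X _ _ ** id2 _) >> assoc X _ _) (id2 X ** assoc _ _ _)).
  rewrite pentagon, !vA.
  rewrite <- (vA (assoc X _ _) (id2 X ** (id2 _ ** _))), <- assoc_nat, h11.
  rewrite <- !vA, assoc_inv_r, v1l, !vA. reflexivity.
Qed.

Lemma G_m_new {x b c d} {Y Y' : hom D x (F0 F b)} (P : cell Y Y')
  (w : FWord (UG C) b c) (v : FWord (UG C) c d) :
  (id2 Y ** lax_m F (evF1 w) (evF1 v)) >> (P ** id2 (F1 F (hcomp1 (evF1 w) (evF1 v))))
  = assoc_inv Y (FF w) (FF v) >> ((P ** id2 (FF w)) ** id2 (FF v)) >>
      (assoc Y' (FF w) (FF v) >> (id2 Y' ** lax_m F (evF1 w) (evF1 v))) >> id2 _.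
Proof.
  rewrite v1r, !vA, <- (vA ((P ** _) ** _)), assoc_nat, h11, <- !vA, assoc_inv_r, v1l, wcomm.
  reflexivity.
Qed.

Lemma G_Phi_merge {x b' b c} (X : hom D x (F0 F b')) (c0 : FWord (UG C) b' b)
  {w w' : FWord (UG C) b c} (xx : FCell w w') :
  (id2 (hcomp1 X (FF c0)) ** FX xx) >> (assoc X (FF c0) (FF w') >> (id2 X ** lax_m F (evF1 c0) (evF1 w')))
  = (assoc X (FF c0) (FF w) >> (id2 X ** lax_m F (evF1 c0) (evF1 w))) >>
      (id2 X ** FX (fc_h _ _ _ _ _ _ _ _ (fc_id _ _ _ c0) xx)).
Proof.
  simpl. rewrite <- h11, <- vA, assoc_nat, vA, <- !wl, mnat_r, wl, vA. reflexivity.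
Qed.


Lemma G_str_merge {x b' b c} {X X' : hom D x (F0 F b')} (s : cell X X')
  {c0 c1 : FWord (UG C) b' b} (xx : FCell c0 c1) (w : FWord (UG C) b c) :
  ((s ** FX xx) ** id2 (FF w)) >> (assoc X' (FF c1) (FF w) >> (id2 X' ** lax_m F (evF1 c1) (evF1 w)))
  = (assoc X (FF c0) (FF w) >> (id2 X ** lax_m F (evF1 c0) (evF1 w))) >>
      (s ** FX (fc_h _ _ _ _ _ _ _ _ xx (fc_id _ _ _ w))).
Proof.
  simpl. rewrite <- vA, assoc_nat, !vA, <- ich, v1r, mnat_l, <- ich, v1l. reflexivity.
Qed.

Lemma G_snoc_merge {x b d} {Y Y0 X : hom D x (F0 F b)} (tau : cell Y X) (P0 : cell Y Y0) (s : cell Y0 X)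
  (c : FWord (UG C) b b) (xx : FCell (funit (G:=UG C) b) c) (w : FWord (UG C) b d) :
  P0 >> s = tau ->
  ((tau >> runit_inv X >> (id2 X ** (lax_i F b >> FX xx))) ** id2 (FF w)) >>
    (assoc X (FF c) (FF w) >> (id2 X ** lax_m F (evF1 c) (evF1 w)))
  = (P0 ** id2 (FF w)) >> (s ** FX (fc_v _ _ _ _ _ _ (fc_lunit_inv _ _ _ w) (fc_h _ _ _ _ _ _ _ _ xx (fc_id _ _ _ w)))).
Proof.
  intro E. rewrite vA, wr, vA, G_merge_unit, (split_lr s), <- vA, <- wr, E. reflexivity.
Qed.

Lemma hsplit {x b c} {X X' X'' Y : hom D x b} {Z : hom D b c} (t : cell X X') (P : cell X' X'')
  (P0 : cell X Y) (s : cell Y X'') (u : cell Z Z) :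
  u = id2 Z -> P0 >> s = t >> P -> (t ** id2 Z) >> (P ** id2 Z) = (P0 ** id2 Z) >> (s ** u).
Proof. intros -> E. rewrite <- !ich, v1l, E. reflexivity. Qed.

Ltac gen_step S w g H :=
  revert H; generalize (stepC S w g); generalize (step S w g); intros ? ? H; inv_ex.

Lemma len_dl : forall a b (l : LWord (UG C) a b) (S : RP a) gs,
  length gs = nphi l -> srt (len S - 1) gs -> len (dl l S gs) - 1 = lastn (len S - 1) gs.
Proof.
  induction l; intros S gs Hl Hs.
  - destruct gs as [|g [|g' gs]]; simpl in Hl; try lia. cbn [dl hd lastn]. simpl in Hs.
    destruct (le_lt_dec (len S) g) as [H|H].
    + pose proof (f_equal (@projT1 _ _) (step_new S f g H)) as E. cbn [projT1] in E. rewrite E.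
      simpl. rewrite len_pad. lia.
    + destruct S as [|b' c' p c0]. simpl in H. lia.
      pose proof (f_equal (@projT1 _ _) (step_merge p c0 f g H)) as E. cbn [projT1] in E. rewrite E.
      simpl in *. lia.
  - destruct gs; simpl in Hl; try lia. reflexivity.
  - simpl in Hl. cbn [dl].
    assert (H1 := IHl1 S (firstn (nphi l1) gs) ltac:(rewrite length_firstn; lia) (srt_firstn _ _ _ Hs)).
    rewrite IHl2.
    + rewrite H1, <- lastn_app, firstn_skipn. reflexivity.
    + rewrite length_skipn. lia.
    + rewrite H1. apply srt_skipn. auto.
Qed.

Lemma CanNat : forall a b (k : LWord (UG C) a b) (S1 S1' : RP a) t gs,
  IsStrT S1 S1' t -> length gs = nphi k -> srt (len S1' - 1) gs ->
  exists t', IsStrT (dl k S1 gs) (dl k S1' gs) t' /\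
    (t ** id2 (evL1 F k)) >> Can k S1' gs = Can k S1 gs >> t'.
Proof.
  induction k; intros S1 S1' t gs Ht Hl Hs.
  - destruct gs as [|g [|g' gs]]; simpl in Hl; try lia. cbn [dl Can hd evL1]. simpl in Hs.
    destruct (le_lt_dec (len S1') g) as [H|H].
    + assert (H2 : len S1 <= g) by (apply IsStrT_len in Ht; lia).
      pose proof (step_new S1' f g H) as E1. pose proof (step_new S1 f g H2) as E2.
      gen_step S1' f g E1. gen_step S1 f g E2.
      assert (K := IsStrT_comp _ _ _ _ (IsStrT_pad (g - len S1') _ S1') _ _ Ht).
      destruct (saturate _ _ _ _ K (g - len S1)) as [s [Hs1 Es1]].
      { rewrite !len_pad. apply IsStrT_len in Ht. lia. }
      exists (s ** FX (fc_id _ _ _ f)). split.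
      * apply it_str. apply is_snoc. auto.
      * apply hsplit. apply FX_id. exact Es1.
    + apply IsStrT_inv in Ht. destruct Ht as [Ht | [p' [c [x [t0 [Ht E]]]]]].
      * destruct S1 as [|b' c' p c0].
        -- apply IsStr_inv_gen in Ht. simpl in Ht. inv_ex. simpl in H. lia.
        -- apply IsStr_inv_gen in Ht. simpl in Ht. destruct Ht as [p2 [c2 [t3 [x3 [H3 E]]]]]. inv_ex.
           assert (HL := IsStr_len _ _ _ _ H3).
           pose proof (step_merge p2 c2 f g H) as E1.
           pose proof (step_merge p c0 f g ltac:(simpl in H; lia)) as E2.
           gen_step (rsnoc p2 c2) f g E1. gen_step (rsnoc p c0) f g E2.
           exists (t3 ** FX (fc_h _ _ _ _ _ _ _ _ x3 (fc_id _ _ _ f))). split.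
           ++ apply it_str. apply is_snoc. auto.
           ++ apply G_str_merge.
      * inv_ex.
        assert (HL := IsStrT_len _ _ _ _ Ht).
        simpl in Hs, H.
        pose proof (step_merge p' c f g H) as E1.
        pose proof (step_new S1 f g ltac:(lia)) as E2.
        gen_step (rsnoc p' c) f g E1. gen_step S1 f g E2.
        destruct (saturate _ _ _ _ Ht (g - len S1)) as [s [Hs1 Es1]].
        { rewrite len_pad. lia. }
        exists (s ** FX (fc_v _ _ _ _ _ _ (fc_lunit_inv _ _ _ f) (fc_h _ _ _ _ _ _ _ _ x (fc_id _ _ _ f)))).
        split.
        -- apply it_str. apply is_snoc. auto.
        -- apply G_snoc_merge. exact Es1.
  - destruct gs; simpl in Hl; try lia. cbn [dl Can evL1].
    exists t. split; auto. apply runit_nat.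
  - simpl in Hl. cbn [dl Can evL1].
    destruct (IHk1 _ _ _ (firstn (nphi k1) gs) Ht ltac:(rewrite length_firstn; lia) (srt_firstn _ _ _ Hs)) as [t1 [H1 E1]].
    destruct (IHk2 _ _ _ (skipn (nphi k1) gs) H1 ltac:(rewrite length_skipn; lia)) as [t2 [H2 E2]].
    { rewrite len_dl. apply srt_skipn. auto. rewrite length_firstn. lia. apply srt_firstn. auto. }
    exists t2. split; auto.
    rewrite <- h11, !vA, <- (vA (t ** _)), assoc_inv_nat, !vA, <- (vA ((t ** _) ** _)), <- wr, E1, wr, !vA, E2.
    reflexivity.
Qed.


Lemma pull_struct : forall a b (l l' : LWord (UG C) a b) (phi : LCell l l') gs,
  (forall i, supp phi i = i) -> length gs = nphi l -> pull phi gs = gs.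
Proof.
  intros. unfold pull. transitivity (map (fun i => nth i gs 0) (seq 0 (nphi l))).
  apply map_ext. intro i. rewrite H. reflexivity. apply map_nth_seq_id. auto.
Qed.

Lemma main2 : forall a b (l l' : LWord (UG C) a b) (phi : LCell l l') (S : RP a) gs,
  length gs = nphi l' -> srt (len S - 1) gs ->
  exists t, IsStrT (dl l S (pull phi gs)) (dl l' S gs) t /\
    (id2 (ND S) ** evL2 F phi) >> Can l' S gs = Can l S (pull phi gs) >> t.
Proof.
  induction phi; intros S gs Hl Hs.
  -
    rewrite pull_struct by auto. exists (id2 _). split. apply IsStrT_refl.
    simpl. rewrite h11, v1l, v1r. reflexivity.
  -
    destruct (IHphi2 S gs Hl Hs) as [ty [Hy Ey]].
    destruct (IHphi1 S (pull phi2 gs) (pull_len _ _ _ _ _ _ _) (pull_srt _ _ _ _ _ _ _ _ Hl Hs)) as [tx [Hx Ex]].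
    rewrite pull_comp. exists (tx >> ty). split. eapply IsStrT_comp; eauto.
    simpl. rewrite wl, vA, Ey, <- vA, Ex, vA. reflexivity.
  -
    simpl in Hl. cbn [dl Can evL2]. rewrite pull_h_first, pull_h_skip.
    set (gl := firstn (nphi l') gs). set (gk := skipn (nphi l') gs).
    assert (Hgl : length gl = nphi l') by (unfold gl; rewrite length_firstn; lia).
    assert (Hgk : length gk = nphi k') by (unfold gk; rewrite length_skipn; lia).
    destruct (IHphi1 S gl Hgl (srt_firstn _ _ _ Hs)) as [tx [Hx Ex]].
    assert (Hsk : srt (len (dl l' S gl) - 1) gk).
    { rewrite len_dl; auto. apply srt_skipn; auto. apply srt_firstn; auto. }
    destruct (CanNat _ _ k' _ _ _ gk Hx Hgk Hsk) as [t3 [H3 E3]].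
    destruct (IHphi2 (dl l S (pull phi1 gl)) gk Hgk) as [ty [Hy Ey]].
    { eapply srt_weaken; [|exact Hsk]. apply IsStrT_len in Hx. lia. }
    exists (ty >> t3). split. eapply IsStrT_comp; eauto.
    cbn [evL1]. rewrite !vA, <- (vA (id2 _ ** _)), assoc_inv_nat, (split_lr (id2 (ND S) ** evL2 F phi1)), !vA.
    rewrite <- (vA (id2 _ ** evL2 F phi2)), <- wcomm.
    rewrite !vA, <- (vA ((id2 _ ** evL2 F phi1) ** _)), <- wr, Ex, wr, !vA.
    rewrite <- (vA (tx ** _)), wcomm, !vA, E3, <- (vA (id2 _ ** evL2 F phi2)), Ey, !vA. reflexivity.
  -
    rewrite pull_struct by (auto; simpl in *; lia).
    simpl in Hl. cbn [dl Can evL2 nphi].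
    rewrite firstn_firstn_add, skipn_firstn_add, skipn_add.
    exists (id2 _). split. apply IsStrT_refl.
    rewrite v1r. apply E_assoc.
  -
    rewrite pull_struct by (auto; simpl in *; lia).
    simpl in Hl. cbn [dl Can evL2 nphi].
    rewrite firstn_firstn_add, skipn_firstn_add, skipn_add.
    exists (id2 _). split. apply IsStrT_refl.
    rewrite v1r. apply E_assoc_inv.
  -
    rewrite pull_struct by (auto; simpl in *; lia). exists (id2 _). split. apply IsStrT_refl.
    cbn [dl Can evL2 nphi firstn skipn]. rewrite v1r. apply E_lunit.
  -
    rewrite pull_struct by (auto; simpl in *; lia). exists (id2 _). split. apply IsStrT_refl.
    cbn [dl Can evL2 nphi firstn skipn]. rewrite v1r. apply E_lunit_inv.
  -
    rewrite pull_struct by (auto; simpl in *; lia).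
    cbn [dl Can evL2 nphi]. rewrite firstn_all2 by lia.
    exists (id2 _). split. apply IsStrT_refl.
    rewrite v1r. apply E_runit.
  -
    rewrite pull_struct by (auto; simpl in *; lia).
    simpl in Hl. cbn [dl Can evL2 nphi]. rewrite firstn_all2 by lia.
    exists (id2 _). split. apply IsStrT_refl.
    rewrite v1r. apply E_runit_inv.
  -
    destruct gs as [|g [|g' gs]]; simpl in Hl; try lia. simpl in Hs.
    change (pull (lc_Phi _ _ _ w w' f) [g]) with [g]. cbn [dl Can evL2 hd].
    destruct (le_lt_dec (len S) g) as [H|H].
    + pose proof (step_new S w' g H) as E1. pose proof (step_new S w g H) as E2.
      gen_step S w' g E1. gen_step S w g E2.
      exists (id2 _ ** FX f). split. apply it_str. apply is_snoc. apply IsStr_refl.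
      symmetry. apply wcomm.
    + destruct S as [|b' c' p c0]. simpl in H; lia.
      pose proof (step_merge p c0 w' g H) as E1. pose proof (step_merge p c0 w g H) as E2.
      gen_step (rsnoc p c0) w' g E1. gen_step (rsnoc p c0) w g E2.
      exists (id2 _ ** FX (fc_h _ _ _ _ _ _ _ _ (fc_id _ _ _ c0) f)). split.
      apply it_str. apply is_snoc. apply IsStr_refl.
      apply G_Phi_merge.
  -
    destruct gs as [|g [|g' gs]]; simpl in Hl; try lia. simpl in Hs.
    match goal with |- context [lc_i _ ?x] => rename x into ai end.
    change (pull (lc_i _ ai) [g]) with (@nil nat). cbn [dl Can evL2 hd].
    destruct (le_lt_dec (len S) g) as [H|H].
    + pose proof (step_new S (funit (G:=UG C) ai) g H) as E1. gen_step S (funit (G:=UG C) ai) g E1.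
      eexists. split. apply it_snoc. apply IsStrT_pad. apply G_i_new.
    + destruct S as [|b' c' p c0]. simpl in H; lia.
      pose proof (step_merge p c0 (funit (G:=UG C) c') g H) as E1. gen_step (rsnoc p c0) (funit (G:=UG C) c') g E1.
      exists (id2 _ ** FX (fc_runit_inv _ _ _ c0)). split.
      apply it_str. apply is_snoc. apply IsStr_refl.
      apply G_i_merge.
  -
    destruct gs as [|g [|g' gs]]; simpl in Hl; try lia. simpl in Hs.
    change (pull (lc_m _ _ _ _ w v) [g]) with [g; g]. cbn [dl Can evL2 hd firstn skipn nphi].
    destruct (le_lt_dec (len S) g) as [H|H].
    + pose proof (step_new S (fcomp w v) g H) as E1. gen_step S (fcomp w v) g E1.
      pose proof (step_new S w g H) as E2. gen_step S w g E2.
      pose proof (step_merge (pad (g - len S) S) w v g ltac:(rewrite len_pad; lia)) as E3.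
      gen_step (rsnoc (pad (g - len S) S) w) v g E3.
      exists (id2 _). split. apply IsStrT_refl. apply G_m_new.
    + destruct S as [|b' c' p c0]. simpl in H; lia.
      pose proof (step_merge p c0 (fcomp w v) g H) as E1. gen_step (rsnoc p c0) (fcomp w v) g E1.
      pose proof (step_merge p c0 w g H) as E2. gen_step (rsnoc p c0) w g E2.
      pose proof (step_merge p (fcomp c0 w) v g H) as E3. gen_step (rsnoc p (fcomp c0 w)) v g E3.
      exists (id2 _ ** FX (fc_assoc _ _ _ _ _ c0 w v)). split.
      apply it_str. apply is_snoc. apply IsStr_refl.
      apply G_m_merge.
Qed.


Lemma seq_split : forall s a b, firstn a (seq s (a + b)) = seq s a /\ skipn a (seq s (a + b)) = seq (s + a) b.
Proof.
  intros. rewrite seq_app. split.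
  apply firstn_app_l. rewrite length_seq. reflexivity.
  apply skipn_app_l. rewrite length_seq. reflexivity.
Qed.

Lemma len_dl_id : forall a b (l : LWord (UG C) a b) (S : RP a),
  len (dl l S (seq (len S) (nphi l))) = len S + nphi l.
Proof.
  induction l; intros S.
  - cbn [dl nphi seq hd]. pose proof (f_equal (@projT1 _ _) (step_new S f (len S) (le_n _))) as E.
    cbn [projT1] in E. rewrite E. simpl. rewrite len_pad. lia.
  - simpl. lia.
  - cbn [dl nphi]. destruct (seq_split (len S) (nphi l1) (nphi l2)) as [E1 E2]. rewrite E1, E2.
    rewrite <- IHl1, IHl2, IHl1. lia.
Qed.

Lemma Can_rinv : forall a b (l : LWord (UG C) a b) (S : RP a),
  exists r, Can l S (seq (len S) (nphi l)) >> r = id2 _.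
Proof.
  induction l; intros S.
  - cbn [dl Can nphi seq hd]. pose proof (step_new S f (len S) (le_n _)) as E.
    gen_step S f (len S) E. rewrite Nat.sub_diag. simpl. rewrite h11. exists (id2 _). apply v1l.
  - cbn [Can]. exists (runit_inv _). apply runit_inv_l.
  - cbn [dl Can nphi]. destruct (seq_split (len S) (nphi l1) (nphi l2)) as [E1 E2]. rewrite E1, E2.
    rewrite <- (len_dl_id _ _ l1 S).
    destruct (IHl1 S) as [r1 H1]. destruct (IHl2 (dl l1 S (seq (len S) (nphi l1)))) as [r2 H2].
    eexists. apply rinv_comp; eauto.
Qed.

End Lev2.

Lemma srt_seq : forall n s m, m <= s -> srt m (seq s n).
Proof. induction n; simpl; intros. auto. split; [lia | apply IHn; lia]. Qed.

Theorem lax_coherence (C D : Bicat) (F : LaxFunctor C D) (a b : ob C)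
  (l l' : LWord (UG C) a b) (phi psi : LCell l l') :
  (forall i, i < nphi l -> supp phi i = supp psi i) -> evL2 F phi = evL2 F psi.
Proof.
  intro Hs.
  set (gs := seq 0 (nphi l')).
  assert (Hl : length gs = nphi l') by (apply length_seq).
  assert (Hsrt : srt (len a (rnil a) - 1) gs) by (apply srt_seq; simpl; lia).
  destruct (main2 F a _ _ l l' phi (rnil a) gs Hl Hsrt) as [t1 [H1 E1]].
  destruct (main2 F a _ _ l l' psi (rnil a) gs Hl Hsrt) as [t2 [H2 E2]].
  assert (Ep : pull phi gs = pull psi gs).
  { unfold pull. apply map_ext_in. intros i Hi. apply in_seq in Hi. rewrite Hs. reflexivity. lia. }
  revert t1 H1 E1. rewrite Ep. intros t1 H1 E1.
  rewrite (IsStrT_det F a _ _ _ _ H1 _ H2) in E1. rewrite <- E2 in E1.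
  destruct (Can_rinv F a _ _ l' (rnil a)) as [r Hr]. simpl len in Hr.
  assert (E: id2 (ND F a (rnil a)) ** evL2 F phi = id2 (ND F a (rnil a)) ** evL2 F psi).
  { transitivity ((id2 (ND F a (rnil a)) ** evL2 F phi) >> Can F a l' (rnil a) gs >> r).
    - rewrite vA. unfold gs. rewrite Hr, v1r. reflexivity.
    - rewrite E1, vA. unfold gs. rewrite Hr, v1r. reflexivity. }
  apply wl_id_faithful in E. exact E.
Qed.

Lemma triangle_inv_g {B : Bicat} {a b c} (f : hom B a b) (g : hom B b c) :
  (runit_inv f ** id2 g) >> assoc f (id1 b) g = id2 f ** lunit_inv g.
Proof.
  rewrite <- (v1r (_ >> _)), <- (h11 f (hcomp1 (id1 b) g)), <- (lunit_inv_l g), wl, <- !vA.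
  rewrite (vA _ (assoc _ _ _)), triangle, <- wr, runit_inv_r, h11, v1l. reflexivity.
Qed.

Definition coB (B : Bicat) : Bicat.
Proof.
  refine {| ob := ob B; hom := hom B; cell := fun a b f g => cell g f;
            id2 := fun a b f => id2 f; vcomp := fun a b f g h x y => vcomp y x;
            id1 := fun a => id1 a; hcomp1 := fun a b c f g => hcomp1 f g;
            hcomp2 := fun a b c f f' g g' x y => hcomp2 x y;
            assoc := fun a b c d f g h => assoc_inv f g h;
            assoc_inv := fun a b c d f g h => assoc f g h;
            lunit := fun a b f => lunit_inv f; lunit_inv := fun a b f => lunit f;
            runit := fun a b f => runit_inv f; runit_inv := fun a b f => runit f |}.
  - intros. apply v1r.
  - intros. apply v1l.
  - intros. symmetry. apply vA.
  - intros. apply h11.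
  - intros. apply ich.
  - intros. symmetry. apply assoc_inv_nat.
  - intros. symmetry. apply lunit_inv_nat.
  - intros. symmetry. apply runit_inv_nat.
  - intros. apply assoc_inv_l.
  - intros. apply assoc_inv_r.
  - intros. apply lunit_inv_l.
  - intros. apply lunit_inv_r.
  - intros. apply runit_inv_l.
  - intros. apply runit_inv_r.
  - intros. simpl. rewrite pentagon_inv, !vA. reflexivity.
  - intros. simpl.
    rewrite <- triangle_inv_g, vA, assoc_inv_l, v1r. reflexivity.
Defined.

Definition coF {C D : Bicat} (G : OplaxFunctor C D) : LaxFunctor (coB C) (coB D).
Proof.
  refine (@Build_LaxFunctor (coB C) (coB D) (oF0 G) (fun a b f => oF1 G f) (fun a b f g x => oF2 G x) _ _
    (fun a => oplax_i G a) (fun a b c f g => oplax_m G f g) _ _ _ _).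
  - intros. exact (oF2_id G f).
  - intros. exact (oF2_comp G y x).
  - intros. cbn in *. symmetry. apply (oplax_m_nat G).
  - intros. cbn.
    change (ob C) in a, b, c, d. change (hom C a b) in f. change (hom C b c) in g. change (hom C c d) in h.
    pose proof (oplax_assoc G f g h) as E.
    assert (K: oplax_m G (hcomp1 f g) h >> (oplax_m G f g ** id2 (oF1 G h)) =
      oF2 G (assoc f g h) >> oplax_m G f (hcomp1 g h) >> (id2 (oF1 G f) ** oplax_m G g h) >> assoc_inv _ _ _).
    { rewrite E, !vA, assoc_inv_l, v1r. reflexivity. }
    rewrite K, !vA, <- (vA (oF2 G _)), <- oF2_comp, assoc_inv_r, oF2_id, v1l. reflexivity.
  - intros. cbn. rewrite <- oplax_lunit, !vA. reflexivity.
  - intros. cbn. rewrite <- oplax_runit, !vA. reflexivity.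
Defined.

Fixpoint frev {G : Graph} {a b : vert G} {w w' : FWord G a b} (x : FCell w w') : FCell w' w :=
  match x in @FCell _ a b w w' return FCell w' w with
  | fc_id _ _ _ w => fc_id _ _ _ w
  | fc_v _ _ _ _ _ _ x y => fc_v _ _ _ _ _ _ (frev y) (frev x)
  | fc_h _ _ _ _ _ _ _ _ x y => fc_h _ _ _ _ _ _ _ _ (frev x) (frev y)
  | fc_assoc _ _ _ _ _ w v u => fc_assoc_inv _ _ _ _ _ w v u
  | fc_assoc_inv _ _ _ _ _ w v u => fc_assoc _ _ _ _ _ w v u
  | fc_lunit _ _ _ w => fc_lunit_inv _ _ _ w
  | fc_lunit_inv _ _ _ w => fc_lunit _ _ _ w
  | fc_runit _ _ _ w => fc_runit_inv _ _ _ w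
  | fc_runit_inv _ _ _ w => fc_runit _ _ _ w
  end.

Fixpoint lrev {G : Graph} {a b : vert G} {l l' : LWord G a b} (x : LCellOp l l') : LCell l' l :=
  match x in @LCellOp _ a b l l' return LCell l' l with
  | lo_id _ _ _ l => lc_id _ _ _ l
  | lo_v _ _ _ _ _ _ x y => lc_v _ _ _ _ _ _ (lrev y) (lrev x)
  | lo_h _ _ _ _ _ _ _ _ x y => lc_h _ _ _ _ _ _ _ _ (lrev x) (lrev y)
  | lo_assoc _ _ _ _ _ l k j => lc_assoc_inv _ _ _ _ _ l k j
  | lo_assoc_inv _ _ _ _ _ l k j => lc_assoc _ _ _ _ _ l k j
  | lo_lunit _ _ _ l => lc_lunit_inv _ _ _ l
  | lo_lunit_inv _ _ _ l => lc_lunit _ _ _ l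
  | lo_runit _ _ _ l => lc_runit_inv _ _ _ l
  | lo_runit_inv _ _ _ l => lc_runit _ _ _ l
  | lo_Phi _ _ _ w w' x => lc_Phi _ _ _ w' w (frev x)
  | lo_i _ a => lc_i _ a
  | lo_m _ _ _ _ w v => lc_m _ _ _ _ w v
  end.

Lemma supp_lrev : forall G a b (l l' : LWord G a b) (x : LCellOp l l') i, supp (lrev x) i = suppOp x i.
Proof. induction x; intros; simpl; try rewrite IHx1, IHx2; auto. Qed.

Definition cst {B : Bicat} {a b} {X X' Y Y' : hom B a b} (e1 : X = X') (e2 : Y = Y') (x : cell X Y) : cell X' Y' :=
  match e1 in _ = Z return cell Z Y' with eq_refl => match e2 in _ = Z return cell X Z with eq_refl => x end end.

Lemma cst_refl {B : Bicat} {a b} {X Y : hom B a b} (e1 : X = X) (e2 : Y = Y) (x : cell X Y) : cst e1 e2 x = x.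
Proof. rewrite (proof_irrelevance _ e1 eq_refl), (proof_irrelevance _ e2 eq_refl). reflexivity. Qed.

Lemma cst_v {B : Bicat} {a b} {X X' Y Y' Z Z' : hom B a b} (e1 : X = X') (e2 : Y = Y') (e3 : Z = Z')
  (x : cell X Y) (y : cell Y Z) : cst e1 e3 (x >> y) = cst e1 e2 x >> cst e2 e3 y.
Proof. destruct e1, e2, e3. reflexivity. Qed.

Lemma cst_h {B : Bicat} {a b c} {X X' Y Y' : hom B a b} {Z Z' W W' : hom B b c}
  (eX : X = X') (eY : Y = Y') (eZ : Z = Z') (eW : W = W')
  (e1 : hcomp1 X Z = hcomp1 X' Z') (e2 : hcomp1 Y W = hcomp1 Y' W') (x : cell X Y) (y : cell Z W) :
  cst e1 e2 (x ** y) = cst eX eY x ** cst eZ eW y.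
Proof. destruct eX, eY, eZ, eW. rewrite cst_refl. reflexivity. Qed.

Lemma cst_id {B : Bicat} {a b} {X X' : hom B a b} (e1 e2 : X = X') : cst e1 e2 (id2 X) = id2 X'.
Proof. destruct e1. rewrite cst_refl. reflexivity. Qed.

Lemma cst_assoc {B : Bicat} {a b c d} {X X' : hom B a b} {Y Y' : hom B b c} {Z Z' : hom B c d}
  (eX : X = X') (eY : Y = Y') (eZ : Z = Z') e1 e2 :
  cst e1 e2 (assoc X Y Z) = assoc X' Y' Z'.
Proof. destruct eX, eY, eZ. apply cst_refl. Qed.
Lemma cst_assoc_inv {B : Bicat} {a b c d} {X X' : hom B a b} {Y Y' : hom B b c} {Z Z' : hom B c d}
  (eX : X = X') (eY : Y = Y') (eZ : Z = Z') e1 e2 :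
  cst e1 e2 (assoc_inv X Y Z) = assoc_inv X' Y' Z'.
Proof. destruct eX, eY, eZ. apply cst_refl. Qed.
Lemma cst_lunit {B : Bicat} {a b} {X X' : hom B a b} (eX : X = X') e1 e2 : cst e1 e2 (lunit X) = lunit X'.
Proof. destruct eX. apply cst_refl. Qed.
Lemma cst_lunit_inv {B : Bicat} {a b} {X X' : hom B a b} (eX : X = X') e1 e2 : cst e1 e2 (lunit_inv X) = lunit_inv X'.
Proof. destruct eX. apply cst_refl. Qed.
Lemma cst_runit {B : Bicat} {a b} {X X' : hom B a b} (eX : X = X') e1 e2 : cst e1 e2 (runit X) = runit X'.
Proof. destruct eX. apply cst_refl. Qed.
Lemma cst_runit_inv {B : Bicat} {a b} {X X' : hom B a b} (eX : X = X') e1 e2 : cst e1 e2 (runit_inv X) = runit_inv X'.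
Proof. destruct eX. apply cst_refl. Qed.

Section Dual.
Context {C D : Bicat} (G : OplaxFunctor C D).

Lemma eF1 : forall a b (w : FWord (UG C) a b), evF1 (C:=coB C) w = evF1 (C:=C) w.
Proof. induction w; simpl; auto. rewrite IHw1, IHw2. reflexivity. Qed.

Lemma eF2 : forall a b (w w' : FWord (UG C) a b) (x : FCell w w'),
  @cst C _ _ _ _ _ _ (eF1 _ _ w) (eF1 _ _ w') (evF2 (C:=coB C) (frev x)) = evF2 (C:=C) x.
Proof.
  induction x; cbn [frev evF2]; cbn.
  - apply cst_id.
  - rewrite (cst_v (B:=C) (eF1 _ _ w) (eF1 _ _ w') (eF1 _ _ w'')), IHx1, IHx2. reflexivity.
  - erewrite cst_h, IHx1, IHx2. reflexivity.
  - apply (cst_assoc (B:=C) (eF1 _ _ w) (eF1 _ _ v) (eF1 _ _ x)).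
  - apply (cst_assoc_inv (B:=C) (eF1 _ _ w) (eF1 _ _ v) (eF1 _ _ x)).
  - apply (cst_lunit (B:=C) (eF1 _ _ w)).
  - apply (cst_lunit_inv (B:=C) (eF1 _ _ w)).
  - apply (cst_runit (B:=C) (eF1 _ _ w)).
  - apply (cst_runit_inv (B:=C) (eF1 _ _ w)).
Qed.


Lemma cst_oF2 {a b} {A A' B0 B' : hom C a b} (eA : A = A') (eB : B0 = B') e1 e2 (x : cell A B0) :
  @cst D _ _ _ _ _ _ e1 e2 (oF2 G x) = oF2 G (@cst C _ _ _ _ _ _ eA eB x).
Proof. destruct eA, eB. rewrite !cst_refl. reflexivity. Qed.

Lemma cst_om {a b c} {f f' : hom C a b} {g g' : hom C b c} (ef : f = f') (eg : g = g') e1 e2 :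
  @cst D _ _ _ _ _ _ e1 e2 (oplax_m G f g) = oplax_m G f' g'.
Proof. destruct ef, eg. apply cst_refl. Qed.

Lemma eL1 : forall a b (l : LWord (UG C) a b), evL1 (coF G) l = evLo1 G l.
Proof. induction l; cbn; auto. rewrite eF1. reflexivity. rewrite IHl1, IHl2. reflexivity. Qed.

Lemma eL2 : forall a b (l l' : LWord (UG C) a b) (x : LCellOp l l'),
  @cst D _ _ _ _ _ _ (eL1 _ _ l) (eL1 _ _ l') (evL2 (coF G) (lrev x)) = evLo2 G x.
Proof.
  induction x; cbn [lrev evL2 evLo2].
  - exact (cst_id (B:=D) _ _).
  - cbn. rewrite (cst_v (B:=D) (eL1 _ _ l) (eL1 _ _ l') (eL1 _ _ l'')), IHx1, IHx2. reflexivity.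
  - cbn. erewrite (cst_h (B:=D) (eL1 _ _ l) (eL1 _ _ l') (eL1 _ _ k) (eL1 _ _ k')), IHx1, IHx2. reflexivity.
  - apply (cst_assoc (B:=D) (eL1 _ _ l) (eL1 _ _ k) (eL1 _ _ j)).
  - apply (cst_assoc_inv (B:=D) (eL1 _ _ l) (eL1 _ _ k) (eL1 _ _ j)).
  - apply (cst_lunit (B:=D) (eL1 _ _ l)).
  - apply (cst_lunit_inv (B:=D) (eL1 _ _ l)).
  - apply (cst_runit (B:=D) (eL1 _ _ l)).
  - apply (cst_runit_inv (B:=D) (eL1 _ _ l)).
  - cbn. rewrite (cst_oF2 (eF1 _ _ w) (eF1 _ _ w')). rewrite eF2. reflexivity.
  - apply cst_refl.
  - cbn. apply (cst_om (eF1 _ _ w) (eF1 _ _ v)).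
Qed.

End Dual.

Theorem oplax_coherence (C D : Bicat) (G : OplaxFunctor C D) (a b : ob C)
  (l l' : LWord (UG C) a b) (phi psi : LCellOp l l') :
  (forall i, i < nphi l' -> suppOp phi i = suppOp psi i) -> evLo2 G phi = evLo2 G psi.
Proof.
  intro Hs.
  assert (E : evL2 (coF G) (lrev phi) = evL2 (coF G) (lrev psi)).
  { apply (lax_coherence (coB C) (coB D) (coF G) a b l' l (lrev phi) (lrev psi)).
    intros i Hi. rewrite !supp_lrev. apply Hs. exact Hi. }
  rewrite <- (eL2 G _ _ _ _ phi), <- (eL2 G _ _ _ _ psi), E. reflexivity.
Qed.


Theorem mainTheorem6 :
  (forall (C D : Bicat) (F : LaxFunctor C D) (a b : ob C)
     (l l' : LWord (UG C) a b) (phi psi : LCell l l'),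
     (forall i, i < nphi l -> supp phi i = supp psi i) ->
     evL2 F phi = evL2 F psi)
  /\
  (forall (C D : Bicat) (F : OplaxFunctor C D) (a b : ob C)
     (l l' : LWord (UG C) a b) (phi psi : LCellOp l l'),
     (forall i, i < nphi l' -> suppOp phi i = suppOp psi i) ->
     evLo2 F phi = evLo2 F psi).
Proof.
  split; intros.
  - apply lax_coherence. exact H.
  - apply oplax_coherence. exact H.
Qed.
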